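(* The category $\mathsf{WHB}$ of WHB-algebras with algebra homomorphisms is dually equivalent to the category $\mathsf{WHBS}$ of WHB-spaces with WHBS-morphisms. The dual equivalence is given by the contravariant functors $\mathrm{X}\colon \mathsf{WHB}\to\mathsf{WHBS}$ and $\mathrm{D}\colon \mathsf{WHBS}\to\mathsf{WHB}$ described below, with natural isomorphisms $\sigma\colon \mathrm{I}_{\mathsf{WHB}}\to \mathrm{D}\circ\mathrm{X}$ and $\epsilon\colon \mathrm{I}_{\mathsf{WHBS}}\to\mathrm{X}\circ\mathrm{D}$ given by $\sigma_{\mathbf{A}}(a)=\{P\in X(\mathbf{A})\colon a\in P\}$ and $\epsilon_X(x)=\{U\in D(X)\colon x\in U\}$.
   Context: A WH-algebra is an algebra $(A,\wedge,\vee,\to,0,1)$ such that $(A,\wedge,\vee,0,1)$ is a bounded distributive lattice and for all $a,b,c$: $a\to a=1$; $a\to(b\wedge c)=(a\to b)\wedge(a\to c)$; $(a\vee b)\to c=(a\to c)\wedge(b\to c)$; $(a\to b)\wedge(b\to c)\le a\to c$. A WD-algebra is an algebra $(A,\wedge,\vee,\leftarrow,0,1)$ with bounded distributive lattice reduct such that for all $a,b,c$: $a\leftarrow a=0$; $(a\vee b)\leftarrow c=(a\leftarrow c)\vee(b\leftarrow c)$; $a\leftarrow(b\wedge c)=(a\leftarrow b)\vee(a\leftarrow c)$; $a\leftarrow c\le(a\leftarrow b)\vee(b\leftarrow c)$. A WHB-algebra is an algebra $(A,\wedge,\vee,\to,\leftarrow,0,1)$ whose $\to$-reduct is a WH-algebra,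 whose $\leftarrow$-reduct is a WD-algebra, and which satisfies for all $a,b$: (E1) $a\wedge((a\to b)\leftarrow 0)\le b$ and (E2) $a\le b\vee(1\to(a\leftarrow b))$. For a relation $\mathcal R$ on $X$, $\mathcal R(x)=\{y\colon (x,y)\in\mathcal R\}$ and $\mathcal R^{-1}(U)=\{x\colon \mathcal R(x)\cap U\neq\emptyset\}$. A WHB-frame is $(X,\le,R,S)$ with $\le$ a partial order and $R,S$ binary relations on $X$ such that: if $x\le y$ and $(y,z)\in R$ then $(x,z)\in R$; if $x\le y$ and $(x,z)\in S$ then $(y,z)\in S$; and $S=R^{-1}$ (i.e. $(x,y)\in S$ iff $(y,x)\in R$). For upsets $U,V$ put $U\Rightarrow_R V=\{x\colon R(x)\cap U\subseteq V\}$ and $U\Leftarrow_S V=\{x\colon S(x)\cap(U\setminus V)\neq\emptyset\}$. A WHB-space is $(X,\tau,\le,R,S)$ such that $(X,\tau,\le)$ is a Priestley space, $(X,\le,R,S)$ is a WHB-frame, $R(x)$ and $S(x)$ are $\tau$-closed for every $x$, and $R^{-1}(U)$, $S^{-1}(U)$ are clopen for every clopen $U$. A WHBS-morphism $f\colon (X_1,\tau_1,\le_1,R_1,S_1)\to(X_2,\tau_2,\le_2,R_2,S_2)$ is a continuous order-preserving map such that for $\mathcal R\in\{R,S\}$: $(x,y)\in\mathcal R_1$ implies $(f(x),f(y))\in\mathcal R_2$; and if $(f(x),z)\in\mathcal R_2$ then there is $y\in\mathcal R_1(x)$ with $f(y)=z$. For a WHB-space $X$, $\mathrm{D}(X)=(D(X),\cap,\cup,\Rightarrow_R,\Leftarrow_S,\emptyset,X)$,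 where $D(X)$ is the set of clopen upsets; for a morphism $f$, $\mathrm{D}(f)(U)=f^{-1}(U)$. For a WHB-algebra $\mathbf A$, $X(\mathbf A)$ is the set of prime filters, $\tau_{\mathbf A}$ the topology with subbase $\{\sigma_{\mathbf A}(a)\}\cup\{X(\mathbf A)\setminus\sigma_{\mathbf A}(a)\}$, $(P,Q)\in R_{\mathbf A}$ iff for all $a,b$ ($a\to b\in P$ and $a\in Q$ imply $b\in Q$), $(P,Q)\in S_{\mathbf A}$ iff for all $a,b$ ($a\in Q$ and $b\notin Q$ imply $a\leftarrow b\in P$), and $\mathrm X(\mathbf A)=(X(\mathbf A),\tau_{\mathbf A},\subseteq,R_{\mathbf A},S_{\mathbf A})$; for a homomorphism $h\colon\mathbf A_1\to\mathbf A_2$, $\mathrm X(h)(P)=h^{-1}(P)$. *)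

(* Defs.v *)
From Stdlib Require Import Classical List.
Set Implicit Arguments.
Unset Strict Implicit.

Record AlgData := {
  acar :> Type;
  ameet : acar -> acar -> acar;
  ajoin : acar -> acar -> acar;
  aimp : acar -> acar -> acar;
  acoimp : acar -> acar -> acar;
  abot : acar;
  atop : acar }.

Arguments ameet : clear implicits.
Arguments ajoin : clear implicits.
Arguments aimp : clear implicits.
Arguments acoimp : clear implicits.
Arguments abot : clear implicits.
Arguments atop : clear implicits.

Definition ale (A : AlgData) (a b : A) : Prop := ameet A a b = a.

Record isWHB (A : AlgData) : Prop := {
  meetC : forall a b : A, ameet A a b = ameet A b a;
  joinC : forall a b : A, ajoin A a b = ajoin A b a;
  meetA : forall a b c : A, ameet A a (ameet A b c) = ameet A (ameet A a b) c;
  joinA : forall a b c : A, ajoin A a (ajoin A b c) = ajoin A (ajoin A a b) c;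
  meetKj : forall a b : A, ameet A a (ajoin A a b) = a;
  joinKm : forall a b : A, ajoin A a (ameet A a b) = a;
  meetDj : forall a b c : A,
      ameet A a (ajoin A b c) = ajoin A (ameet A a b) (ameet A a c);
  join0 : forall a : A, ajoin A a (abot A) = a;
  meet1 : forall a : A, ameet A a (atop A) = a;
  (* WH-algebra axioms for -> *)
  imp_refl : forall a : A, aimp A a a = atop A;
  imp_meet : forall a b c : A,
      aimp A a (ameet A b c) = ameet A (aimp A a b) (aimp A a c);
  imp_join : forall a b c : A,
      aimp A (ajoin A a b) c = ameet A (aimp A a c) (aimp A b c);
  imp_trans : forall a b c : A,
      ale (ameet A (aimp A a b) (aimp A b c)) (aimp A a c);
  (* WD-algebra axioms for <- *)
  coimp_refl : forall a : A, acoimp A a a = abot A;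
  coimp_join : forall a b c : A,
      acoimp A (ajoin A a b) c = ajoin A (acoimp A a c) (acoimp A b c);
  coimp_meet : forall a b c : A,
      acoimp A a (ameet A b c) = ajoin A (acoimp A a b) (acoimp A a c);
  coimp_trans : forall a b c : A,
      ale (acoimp A a c) (ajoin A (acoimp A a b) (acoimp A b c));
  E1 : forall a b : A, ale (ameet A a (acoimp A (aimp A a b) (abot A))) b;
  E2 : forall a b : A, ale a (ajoin A b (aimp A (atop A) (acoimp A a b))) }.

Record hom (A B : AlgData) (h : A -> B) : Prop := {
  hom_meet : forall a b, h (ameet A a b) = ameet B (h a) (h b);
  hom_join : forall a b, h (ajoin A a b) = ajoin B (h a) (h b);
  hom_imp : forall a b, h (aimp A a b) = aimp B (h a) (h b);
  hom_coimp : forall a b, h (acoimp A a b) = acoimp B (h a) (h b);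
  hom_bot : h (abot A) = abot B;
  hom_top : h (atop A) = atop B }.

Definition alg_iso (A B : AlgData) (h : A -> B) : Prop :=
  hom h /\ exists g : B -> A, hom g /\ (forall a, g (h a) = a) /\ (forall b, h (g b) = b).

Record prime_filter (A : AlgData) (P : A -> Prop) : Prop := {
  pf_top : P (atop A);
  pf_meet : forall a b, P a -> P b -> P (ameet A a b);
  pf_up : forall a b, P a -> ale a b -> P b;
  pf_proper : ~ P (abot A);
  pf_prime : forall a b, P (ajoin A a b) -> P a \/ P b }.

(* A topology, given by its family of open sets (subsets = predicates;
   top_ext records that it is a family of sets, i.e. extensional). *)
Record is_topology (T : Type) (O : (T -> Prop) -> Prop) : Prop := {
  top_ext : forall U V, O U -> (forall x, U x <-> V x) -> O V;
  top_empty : O (fun _ => False);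
  top_full : O (fun _ => True);
  top_inter : forall U V, O U -> O V -> O (fun x => U x /\ V x);
  top_union : forall F, (forall U, F U -> O U) -> O (fun x => exists U, F U /\ U x) }.

Definition compact (T : Type) (O : (T -> Prop) -> Prop) : Prop :=
  forall F : (T -> Prop) -> Prop, (forall U, F U -> O U) ->
    (forall x, exists U, F U /\ U x) ->
    exists l : list (T -> Prop), (forall U, In U l -> F U) /\
      (forall x, exists U, In U l /\ U x).

Record SpData := {
  pt : Type;
  opens : (pt -> Prop) -> Prop;
  sle : pt -> pt -> Prop;
  sR : pt -> pt -> Prop;
  sS : pt -> pt -> Prop }.

Arguments opens : clear implicits.
Arguments sle : clear implicits.
Arguments sR : clear implicits.
Arguments sS : clear implicits.

Definition clopen (X : SpData) (U : pt X -> Prop) : Prop :=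
  opens X U /\ opens X (fun x => ~ U x).
Definition upset (X : SpData) (U : pt X -> Prop) : Prop :=
  forall x y, sle X x y -> U x -> U y.
Arguments clopen : clear implicits.
Arguments upset : clear implicits.
Definition preR (X : SpData) (U : pt X -> Prop) : pt X -> Prop :=
  fun x => exists y, sR X x y /\ U y.
Definition preS (X : SpData) (U : pt X -> Prop) : pt X -> Prop :=
  fun x => exists y, sS X x y /\ U y.

Arguments preR : clear implicits.
Arguments preS : clear implicits.

Record isWHBS (X : SpData) : Prop := {
  sp_top : is_topology (opens X);
  sp_compact : compact (opens X);
  le_refl : forall x, sle X x x;
  le_trans : forall x y z, sle X x y -> sle X y z -> sle X x z;
  le_anti : forall x y, sle X x y -> sle X y x -> x = y;
  priestley : forall x y, ~ sle X x y ->
      exists U, clopen X U /\ upset X U /\ U x /\ ~ U y;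
  R_down : forall x y z, sle X x y -> sR X y z -> sR X x z;
  S_up : forall x y z, sle X x y -> sS X x z -> sS X y z;
  S_conv : forall x y, sS X x y <-> sR X y x;
  R_closed : forall x, opens X (fun y => ~ sR X x y);
  S_closed : forall x, opens X (fun y => ~ sS X x y);
  R_inv_clopen : forall U, clopen X U -> clopen X (preR X U);
  S_inv_clopen : forall U, clopen X U -> clopen X (preS X U) }.

Record WHBSpace := { wsp :> SpData; wsp_ax : isWHBS wsp }.

Record whbs_morphism (X1 X2 : SpData) (f : pt X1 -> pt X2) : Prop := {
  mor_cont : forall U, opens X2 U -> opens X1 (fun x => U (f x));
  mor_mono : forall x y, sle X1 x y -> sle X2 (f x) (f y);
  mor_R_forth : forall x y, sR X1 x y -> sR X2 (f x) (f y);
  mor_R_back : forall x z, sR X2 (f x) z -> exists y, sR X1 x y /\ f y = z;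
  mor_S_forth : forall x y, sS X1 x y -> sS X2 (f x) (f y);
  mor_S_back : forall x z, sS X2 (f x) z -> exists y, sS X1 x y /\ f y = z }.

Arguments whbs_morphism : clear implicits.

Definition space_iso (X1 X2 : SpData) (f : pt X1 -> pt X2) : Prop :=
  whbs_morphism X1 X2 f /\ exists g : pt X2 -> pt X1, whbs_morphism X2 X1 g /\
    (forall x, g (f x) = x) /\ (forall y, f (g y) = y).

Arguments space_iso : clear implicits.

Definition PF (A : AlgData) : Type := { P : A -> Prop | prime_filter P }.

Definition subbase (A : AlgData) (V : PF A -> Prop) : Prop :=
  (exists a, forall P, V P <-> proj1_sig P a) \/
  (exists a, forall P, V P <-> ~ proj1_sig P a).

Definition gen_opens (A : AlgData) (V : PF A -> Prop) : Prop :=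
  forall O, is_topology O -> (forall W, subbase W -> O W) -> O V.

Definition Xd (A : AlgData) : SpData := {|
  pt := PF A;
  opens := @gen_opens A;
  sle := fun P Q => forall a, proj1_sig P a -> proj1_sig Q a;
  sR := fun P Q => forall a b, proj1_sig P (aimp A a b) -> proj1_sig Q a -> proj1_sig Q b;
  sS := fun P Q => forall a b, proj1_sig Q a -> ~ proj1_sig Q b -> proj1_sig P (acoimp A a b) |}.

Section DualAlg.
Variable X : WHBSpace.
Let HX := wsp_ax X.
Let HT := sp_top HX.

Lemma opens_union2 (U V : pt X -> Prop) :
  opens X U -> opens X V -> opens X (fun x => U x \/ V x).
Proof.
intros HU HV.
pose proof (top_union HT (F := fun W => W = U \/ W = V)) as H.
eapply (top_ext HT); [apply H|].
- intros W [->| ->]; assumption.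
- intros x; split.
  + intros [W [[-> | ->] Hx]]; [left|right]; exact Hx.
  + intros [Hx|Hx]; [exists U|exists V]; auto.
Qed.

Lemma clopen_ext (U V : pt X -> Prop) :
  clopen X U -> (forall x, U x <-> V x) -> clopen X V.
Proof.
intros [H1 H2] E; split.
- exact (top_ext HT H1 E).
- apply (top_ext HT H2); intros x; rewrite (E x); tauto.
Qed.

Lemma clopen_compl (U : pt X -> Prop) : clopen X U -> clopen X (fun x => ~ U x).
Proof.
intros [H1 H2]; split; [exact H2|].
apply (top_ext HT H1); intros x; split; [tauto|].
intros H; apply NNPP; exact H.
Qed.

Lemma clopen_inter (U V : pt X -> Prop) :
  clopen X U -> clopen X V -> clopen X (fun x => U x /\ V x).
Proof.
intros [U1 U2] [V1 V2]; split; [exact (top_inter HT U1 V1)|].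
apply (top_ext HT (opens_union2 U2 V2)); intros x; split.
- intros [H|H] [H1 H2]; tauto.
- intros H; destruct (classic (U x)); [right|left]; tauto.
Qed.

Lemma clopen_union (U V : pt X -> Prop) :
  clopen X U -> clopen X V -> clopen X (fun x => U x \/ V x).
Proof.
intros HU HV.
apply clopen_ext with (U := fun x => ~ (~ U x /\ ~ V x)).
- apply clopen_compl, clopen_inter; apply clopen_compl; assumption.
- intros x; split; [|tauto].
  intros H; destruct (classic (U x)); [left|right]; tauto.
Qed.

Definition cu (U : pt X -> Prop) : Prop := clopen X U /\ upset X U.
Definition Dcar : Type := { U : pt X -> Prop | cu U }.

Lemma cu_bot : cu (fun _ => False).
Proof.
split; [split|].
- exact (top_empty HT).
- apply (top_ext HT (top_full HT)); tauto.
- intros x y _ [].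
Qed.

Lemma cu_top : cu (fun _ => True).
Proof.
split; [split|].
- exact (top_full HT).
- apply (top_ext HT (top_empty HT)); tauto.
- intros x y _ _; exact I.
Qed.

Lemma cu_meet (U V : Dcar) : cu (fun x => proj1_sig U x /\ proj1_sig V x).
Proof.
destruct U as [U [HU1 HU2]], V as [V [HV1 HV2]]; simpl; split.
- apply clopen_inter; assumption.
- intros x y Hxy [Hx Hy]; split; [exact (HU2 x y Hxy Hx)|exact (HV2 x y Hxy Hy)].
Qed.

Lemma cu_join (U V : Dcar) : cu (fun x => proj1_sig U x \/ proj1_sig V x).
Proof.
destruct U as [U [HU1 HU2]], V as [V [HV1 HV2]]; simpl; split.
- apply clopen_union; assumption.
- intros x y Hxy [Hx|Hy]; [left; exact (HU2 x y Hxy Hx)|right; exact (HV2 x y Hxy Hy)].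
Qed.

Lemma cu_imp (U V : Dcar) :
  cu (fun x => forall y, sR X x y -> proj1_sig U y -> proj1_sig V y).
Proof.
destruct U as [U [HU1 HU2]], V as [V [HV1 HV2]]; simpl; split.
- apply clopen_ext with (U := fun x => ~ preR X (fun y => U y /\ ~ V y) x).
  + apply clopen_compl, (R_inv_clopen HX), clopen_inter;
      [assumption| apply clopen_compl; assumption].
  + intros x; unfold preR; split.
    * intros H y Hxy Uy; apply NNPP; intros nV; apply H; exists y; auto.
    * intros H [y [Hxy [Uy nVy]]]; apply nVy, H; assumption.
- intros x y Hxy H z Ryz Uz; apply H; [exact (R_down HX Hxy Ryz)|exact Uz].
Qed.

Lemma cu_coimp (U V : Dcar) :
  cu (fun x => exists y, sS X x y /\ (proj1_sig U y /\ ~ proj1_sig V y)).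
Proof.
destruct U as [U [HU1 HU2]], V as [V [HV1 HV2]]; simpl; split.
- exact (@S_inv_clopen _ HX (fun y => U y /\ ~ V y)
      (clopen_inter HU1 (clopen_compl HV1))).
- intros x y Hxy [z [Sxz Hz]]; exists z; split; [exact (S_up HX Hxy Sxz)|exact Hz].
Qed.

Definition Dd : AlgData := {|
  acar := Dcar;
  ameet := fun U V => exist _ _ (cu_meet U V);
  ajoin := fun U V => exist _ _ (cu_join U V);
  aimp := fun U V => exist _ _ (cu_imp U V);
  acoimp := fun U V => exist _ _ (cu_coimp U V);
  abot := exist _ _ cu_bot;
  atop := exist _ _ cu_top |}.

End DualAlg.

Definition XWHBS (A : AlgData) (HX : isWHBS (Xd A)) : WHBSpace :=
  {| wsp := Xd A; wsp_ax := HX |}.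

(* Main.v *)
Require Import Defs.
From Stdlib Require Import Classical List ProofIrrelevance FunctionalExtensionality PropExtensionality IndefiniteDescription.
From mathcomp Require classical_sets boolp.
Set Implicit Arguments.
Unset Strict Implicit.

Lemma asb_i (P : Prop) : P -> is_true (boolp.asbool P).
Proof. intro h; exact (ssrbool.introT (boolp.asboolP P) h). Qed.
Lemma asb_e (P : Prop) : is_true (boolp.asbool P) -> P.
Proof. intro h; exact (ssrbool.elimT (boolp.asboolP P) h). Qed.

Lemma zorn_sets (T : Type) (Pr : (T -> Prop) -> Prop) (X0 : T -> Prop) :
  Pr X0 ->
  (forall C : (T->Prop) -> Prop, (forall X, C X -> Pr X) -> (exists X, C X) ->
     (forall X Y, C X -> C Y -> (forall t, X t -> Y t) \/ (forall t, Y t -> X t)) ->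
     Pr (fun t => exists X, C X /\ X t)) ->
  exists M, Pr M /\ (forall t, X0 t -> M t) /\
     (forall N, Pr N -> (forall t, M t -> N t) -> forall t, N t -> M t).
Proof.
intros H0 Hch.
set (S := {X : T -> Prop | Pr X /\ forall t, X0 t -> X t}).
set (R := fun a b : S => boolp.asbool (forall t, proj1_sig a t -> proj1_sig b t)).
assert (t0 : S) by (exists X0; split; auto).
destruct (@classical_sets.ZL_preorder S t0 R) as [M HM].
- intros t; apply asb_i; auto.
- intros r s t H1 H2; apply asb_i.
  apply asb_e in H1; apply asb_e in H2; auto.
- intros A HA.
  destruct (classic (exists s, A s)) as [[s0 Hs0]|Hne].
  + assert (HP : Pr (fun t => exists X, (fun X => exists s, A s /\ proj1_sig s = X) X /\ X t)).
    { apply Hch.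
      - intros X [s [_ <-]]; exact (proj1 (proj2_sig s)).
      - exists (proj1_sig s0); eauto.
      - intros X Y [s [As <-]] [s' [As' <-]].
        destruct (HA s s' As As') as [h|h]; apply asb_e in h; auto. }
    unshelve eexists (exist (fun X => Pr X /\ forall t, X0 t -> X t) _ (conj HP _)).
    * intros t Ht; exists (proj1_sig s0); split; [eauto|]. exact (proj2 (proj2_sig s0) t Ht).
    * intros s As; apply asb_i; simpl; intros t Ht; exists (proj1_sig s); eauto.
  + exists t0; intros s As; exfalso; apply Hne; eauto.
- exists (proj1_sig M); split; [exact (proj1 (proj2_sig M))|split; [exact (proj2 (proj2_sig M))|]].
  intros N HN HMN.
  set (n := exist (fun X => Pr X /\ forall t, X0 t -> X t) N
              (conj HN (fun t h => HMN t (proj2 (proj2_sig M) t h)))).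
  assert (h : is_true (R M n)) by (apply asb_i; exact HMN).
  specialize (HM n h). apply asb_e in HM. exact HM.
Qed.

Record DLat (T : Type) (m j : T -> T -> T) : Prop := {
  dl_mC : forall a b, m a b = m b a; dl_jC : forall a b, j a b = j b a;
  dl_mA : forall a b c, m a (m b c) = m (m a b) c;
  dl_jA : forall a b c, j a (j b c) = j (j a b) c;
  dl_mK : forall a b, m a (j a b) = a; dl_jK : forall a b, j a (m a b) = a;
  dl_mD : forall a b c, m a (j b c) = j (m a b) (m a c) }.

Section Lat.
Variables (T : Type) (m j : T -> T -> T) (L : DLat m j).
Let mC := dl_mC L. Let jC := dl_jC L. Let mA := dl_mA L. Let jA := dl_jA L.
Let mK := dl_mK L. Let jK := dl_jK L. Let mD := dl_mD L.

Definition lle a b := m a b = a.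

Lemma mI a : m a a = a.
Proof. transitivity (m a (j a (m a a))); [f_equal; symmetry; apply jK| apply mK]. Qed.
Lemma jI a : j a a = a.
Proof. transitivity (j a (m a (j a a))); [f_equal; symmetry; apply mK| apply jK]. Qed.

Lemma jD a b c : j a (m b c) = m (j a b) (j a c).
Proof.
rewrite (mD (j a b) a c).
rewrite (mC (j a b) a), mK.
rewrite (mC (j a b) c), mD.
rewrite jA, (mC c a), jK. rewrite (mC c b). reflexivity.
Qed.

Lemma lle_refl a : lle a a. Proof. apply mI. Qed.
Lemma lle_trans a b c : lle a b -> lle b c -> lle a c.
Proof. unfold lle; intros h1 h2. rewrite <- h1 at 1. rewrite <- mA, h2. exact h1. Qed.
Lemma lle_anti a b : lle a b -> lle b a -> a = b.
Proof. unfold lle; intros h1 h2. transitivity (m a b); [symmetry; exact h1|]. rewrite mC; exact h2. Qed.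
Lemma lle_mL a b : lle (m a b) a.
Proof. unfold lle. rewrite (mC (m a b) a), mA, mI. reflexivity. Qed.
Lemma lle_mR a b : lle (m a b) b.
Proof. unfold lle. rewrite <- mA, mI. reflexivity. Qed.
Lemma lle_glb a b c : lle c a -> lle c b -> lle c (m a b).
Proof. unfold lle; intros h1 h2. rewrite mA, h1, h2. reflexivity. Qed.
Lemma lle_jL a b : lle a (j a b).
Proof. apply mK. Qed.
Lemma lle_jR a b : lle b (j a b).
Proof. unfold lle. rewrite jC. apply mK. Qed.
Lemma lle_lub a b c : lle a c -> lle b c -> lle (j a b) c.
Proof.
unfold lle; intros h1 h2. rewrite mC, mD, (mC c a), (mC c b), h1, h2. reflexivity.
Qed.
Lemma lle_j a b : lle a b <-> j a b = b.
Proof.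
unfold lle; split; intro h.
- rewrite <- h, mC, jC, jK. reflexivity.
- rewrite <- h. apply mK.
Qed.
Lemma lle_mono_m a a' b b' : lle a a' -> lle b b' -> lle (m a b) (m a' b').
Proof.
intros h1 h2; apply lle_glb.
- eapply lle_trans; [apply lle_mL|exact h1].
- eapply lle_trans; [apply lle_mR|exact h2].
Qed.
Lemma lle_mono_j a a' b b' : lle a a' -> lle b b' -> lle (j a b) (j a' b').
Proof.
intros h1 h2; apply lle_lub.
- eapply lle_trans; [exact h1|apply lle_jL].
- eapply lle_trans; [exact h2|apply lle_jR].
Qed.

Definition filt (F : T -> Prop) :=
  (forall a b, F a -> F b -> F (m a b)) /\ (forall a b, F a -> lle a b -> F b).
Definition idl (I : T -> Prop) :=
  (forall a b, I a -> I b -> I (j a b)) /\ (forall a b, I b -> lle a b -> I a).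

Lemma maxfilt (F I : T -> Prop) : (exists x, F x) -> filt F -> idl I ->
  (forall x, F x -> I x -> False) ->
  exists Q, (forall x, F x -> Q x) /\ filt Q /\ (forall x, Q x -> I x -> False) /\
    (forall x y, Q (j x y) -> Q x \/ Q y) /\
    (forall x, ~ Q x -> exists q, Q q /\ I (m q x)).
Proof.
intros [x0 Fx0] HF [HI1 HI2] Hdis.
destruct (@zorn_sets T (fun Q => filt Q /\ (forall x, Q x -> I x -> False)) F)
  as [M [[[HM1 HM2] HMd] [HFM Hmax]]].
- split; assumption.
- intros C HC [X0 CX0] Hch; split; [split|].
  + intros a b [X [CX Xa]] [Y [CY Yb]].
    destruct (Hch X Y CX CY) as [h|h].
    * exists Y; split; [exact CY|]. apply (proj1 (proj1 (HC Y CY))); auto.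
    * exists X; split; [exact CX|]. apply (proj1 (proj1 (HC X CX))); auto.
  + intros a b [X [CX Xa]] hab. exists X; split; [exact CX|].
    exact (proj2 (proj1 (HC X CX)) a b Xa hab).
  + intros x [X [CX Xx]] Ix. exact (proj2 (HC X CX) x Xx Ix).
- assert (Hmx : forall x, ~ M x -> exists q, M q /\ I (m q x)).
  { intros x nMx.
    apply NNPP; intro hn.
    set (N := fun z => exists q, M q /\ lle (m q x) z).
    assert (HMN : forall t, M t -> N t).
    { intros t Mt; exists t; split; [exact Mt|apply lle_mL]. }
    assert (PN : filt N /\ (forall x, N x -> I x -> False)).
    { split; [split|].
      - intros a b [q [Mq h1]] [q' [Mq' h2]]. exists (m q q'); split; [apply HM1; auto|].
        apply lle_glb.
        + eapply lle_trans; [|exact h1]. apply lle_mono_m; [apply lle_mL|apply lle_refl].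
        + eapply lle_trans; [|exact h2]. apply lle_mono_m; [apply lle_mR|apply lle_refl].
      - intros a b [q [Mq h]] hab. exists q; split; [exact Mq|eapply lle_trans; eauto].
      - intros z [q [Mq h]] Iz. apply hn. exists q; split; [exact Mq|]. eapply HI2; eauto. }
    apply nMx. apply (Hmax N PN HMN). exists x0; split; [auto|apply lle_mR]. }
  exists M; split; [exact HFM|split; [split; assumption|split; [exact HMd|split; [|exact Hmx]]]].
  intros x y Mxy. apply NNPP; intro hn.
  destruct (Hmx x (fun h => hn (or_introl h))) as [q1 [Mq1 I1]].
  destruct (Hmx y (fun h => hn (or_intror h))) as [q2 [Mq2 I2]].
  apply (HMd (m (m q1 q2) (j x y))).
  + apply HM1; [apply HM1|]; assumption.
  + rewrite mD. apply HI1.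
    * eapply HI2; [exact I1|]. apply lle_mono_m; [apply lle_mL|apply lle_refl].
    * eapply HI2; [exact I2|]. apply lle_mono_m; [apply lle_mR|apply lle_refl].
Qed.

Lemma DLat_dual : DLat j m.
Proof. split; auto. apply jD. Qed.

End Lat.

Section Alg.
Variables (A : AlgData) (HA : isWHB A).
Local Notation mt := (ameet A).
Local Notation jn := (ajoin A).
Local Notation im := (aimp A).
Local Notation ci := (acoimp A).
Local Notation bt := (abot A).
Local Notation tp := (atop A).
Implicit Types a b c d x y q : A.

Lemma ADL : DLat mt jn.
Proof. destruct HA; split; auto. Qed.
Lemma ADLd : DLat jn mt.
Proof. apply DLat_dual, ADL. Qed.

Lemma ale_refl a : ale a a. Proof. exact (lle_refl ADL a). Qed.
Lemma ale_trans a b c : ale a b -> ale b c -> ale a c. Proof. exact (@lle_trans _ _ _ ADL a b c). Qed.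
Lemma ale_anti a b : ale a b -> ale b a -> a = b. Proof. exact (@lle_anti _ _ _ ADL a b). Qed.
Lemma ale_mL a b : ale (mt a b) a. Proof. exact (lle_mL ADL a b). Qed.
Lemma ale_mR a b : ale (mt a b) b. Proof. exact (lle_mR ADL a b). Qed.
Lemma ale_glb a b c : ale c a -> ale c b -> ale c (mt a b). Proof. exact (@lle_glb _ _ _ ADL a b c). Qed.
Lemma ale_jL a b : ale a (jn a b). Proof. exact (lle_jL ADL a b). Qed.
Lemma ale_jR a b : ale b (jn a b). Proof. exact (lle_jR ADL a b). Qed.
Lemma ale_lub a b c : ale a c -> ale b c -> ale (jn a b) c. Proof. exact (@lle_lub _ _ _ ADL a b c). Qed.
Lemma ale_j a b : ale a b <-> jn a b = b. Proof. exact (lle_j ADL a b). Qed.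
Lemma ale_mono_m a (a' : A) b (b' : A) : ale a a' -> ale b b' -> ale (mt a b) (mt a' b').
Proof. exact (@lle_mono_m _ _ _ ADL a a' b b'). Qed.
Lemma ale_mono_j a (a' : A) b (b' : A) : ale a a' -> ale b b' -> ale (jn a b) (jn a' b').
Proof. exact (@lle_mono_j _ _ _ ADL a a' b b'). Qed.
Lemma ale_top a : ale a tp. Proof. apply (meet1 HA). Qed.
Lemma ale_bot a : ale bt a.
Proof. apply ale_j. rewrite (joinC HA). apply (join0 HA). Qed.
Lemma top_meet a : mt tp a = a. Proof. rewrite (meetC HA). apply (meet1 HA). Qed.
Lemma bot_join a : jn bt a = a. Proof. rewrite (joinC HA). apply (join0 HA). Qed.
Lemma dual_le a b : lle jn a b <-> ale b a.
Proof. unfold lle. rewrite ale_j, (joinC HA). tauto. Qed.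

Lemma imp_le a b : ale a b -> im a b = tp.
Proof.
intro h. unfold ale in h.
assert (e : im a (mt a b) = im a a) by (rewrite h; reflexivity).
rewrite (imp_meet HA), (imp_refl HA), top_meet in e. exact e.
Qed.
Lemma imp_mono2 a b (b' : A) : ale b b' -> ale (im a b) (im a b').
Proof. intro h. unfold ale in *. rewrite <- (imp_meet HA), h. reflexivity. Qed.
Lemma imp_anti1 a (a' : A) b : ale a a' -> ale (im a' b) (im a b).
Proof.
intro h. apply ale_j in h.
replace (im a' b) with (mt (im a b) (im a' b)); [apply ale_mL|].
rewrite <- (imp_join HA), h. reflexivity.
Qed.
Lemma imp_tr a b c : ale (mt (im a b) (im b c)) (im a c). Proof. apply (imp_trans HA). Qed.

Lemma coimp_le a b : ale a b -> ci a b = bt.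
Proof.
intro h. apply ale_j in h.
assert (e : ci (jn a b) b = ci b b) by (rewrite h; reflexivity).
rewrite (coimp_join HA), (coimp_refl HA), (join0 HA) in e. exact e.
Qed.
Lemma coimp_mono1 a (a' : A) b : ale a a' -> ale (ci a b) (ci a' b).
Proof. intro h. apply ale_j in h.
replace (ci a' b) with (jn (ci a b) (ci a' b)); [apply ale_jL|].
rewrite <- (coimp_join HA), h. reflexivity. Qed.
Lemma coimp_anti2 a b (b' : A) : ale b b' -> ale (ci a b') (ci a b).
Proof. intro h. unfold ale in h.
replace (ci a b) with (jn (ci a b) (ci a b')); [apply ale_jR|].
rewrite <- (coimp_meet HA), h. reflexivity. Qed.
Lemma coimp_tr a b c : ale (ci a c) (jn (ci a b) (ci b c)). Proof. apply (coimp_trans HA). Qed.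

Section PFl.
Variables (P : A -> Prop) (HP : prime_filter P).
Lemma pf_le a b : P a -> ale a b -> P b. Proof. apply (pf_up HP). Qed.
Lemma pf_m a b : P a -> P b -> P (mt a b). Proof. apply (pf_meet HP). Qed.
Lemma pf_mE a b : P (mt a b) -> P a /\ P b.
Proof. intro h; split; eapply pf_le; eauto; [apply ale_mL|apply ale_mR]. Qed.
Lemma pf_jE a b : P (jn a b) -> P a \/ P b. Proof. apply (pf_prime HP). Qed.
Lemma pf_jI a b : P a \/ P b -> P (jn a b).
Proof. intros [h|h]; eapply pf_le; eauto; [apply ale_jL|apply ale_jR]. Qed.
End PFl.

Definition Rrel (P Q : A -> Prop) := forall a b, P (im a b) -> Q a -> Q b.
Definition Srel (P Q : A -> Prop) := forall a b, Q a -> ~ Q b -> P (ci a b).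

Lemma pft (F I : A -> Prop) : (exists x, F x) -> filt mt F -> (exists x, I x) -> idl mt jn I ->
  (forall x, F x -> I x -> False) ->
  exists Q, prime_filter Q /\ (forall x, F x -> Q x) /\ (forall x, Q x -> I x -> False) /\
    (forall x, ~ Q x -> exists q, Q q /\ I (mt q x)).
Proof.
intros [x0 Fx0] HF [y0 Iy0] HI Hd.
destruct (maxfilt ADL (ex_intro _ x0 Fx0) HF HI Hd) as [Q [HFQ [[Q1 Q2] [HQd [Hpr Hmx]]]]].
exists Q; split; [|split; [exact HFQ|split; [exact HQd|exact Hmx]]].
split.
- apply Q2 with x0; [auto|apply ale_top].
- exact Q1.
- exact Q2.
- intro h. apply (HQd bt h). apply (proj2 HI) with y0; [auto|apply ale_bot].
- exact Hpr.
Qed.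

Lemma R_constr (P F0 J0 : A -> Prop) : prime_filter P ->
  (exists x, F0 x) -> filt mt F0 -> (exists x, J0 x) -> idl mt jn J0 ->
  (forall c d, J0 d -> P (im c d) -> J0 c) ->
  (forall x, F0 x -> J0 x -> False) ->
  exists Q, prime_filter Q /\ (forall x, F0 x -> Q x) /\ (forall x, Q x -> J0 x -> False) /\ Rrel P Q.
Proof.
intros HP HF0 HF HJ0 HJ Hcl Hd.
destruct (pft HF0 HF HJ0 HJ Hd) as [Q [HQ [HFQ [HQd Hmx]]]].
exists Q; split; [exact HQ|split; [exact HFQ|split; [exact HQd|]]].
intros c d Pcd Qc. apply NNPP; intro nQd.
destruct (Hmx d nQd) as [q [Qq Jqd]].
apply (HQd (mt q c)); [apply (pf_m HQ); auto|].
apply Hcl with (mt q d); [exact Jqd|].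
rewrite (imp_meet HA). apply (pf_m HP).
- rewrite imp_le; [apply (pf_top HP)|apply ale_mL].
- apply (pf_le HP) with (mt (im (mt q c) c) (im c d)); [|apply imp_tr].
  rewrite imp_le; [|apply ale_mR]. rewrite top_meet; exact Pcd.
Qed.

Lemma S_constr (P F0 J0 : A -> Prop) : prime_filter P ->
  (exists x, F0 x) -> filt mt F0 -> (exists x, J0 x) -> idl mt jn J0 ->
  (forall x y, F0 x -> ~ P (ci x y) -> F0 y) ->
  (forall x, F0 x -> J0 x -> False) ->
  exists Q, prime_filter Q /\ (forall x, F0 x -> Q x) /\ (forall x, Q x -> J0 x -> False) /\ Srel P Q.
Proof.
intros HP [x0 Fx0] [F1 F2] [y0 Jy0] [J1 J2] Hcl Hd.
assert (HJd : filt jn J0).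
{ split; [exact J1|]. intros a b Ja hab. apply dual_le in hab. eapply J2; eauto. }
assert (HFd : idl jn mt F0).
{ split; [exact F1|]. intros a b Fb hab. apply dual_le in hab. eapply F2; eauto. }
destruct (maxfilt ADLd (ex_intro _ y0 Jy0) HJd HFd (fun x h1 h2 => Hd x h2 h1))
  as [J [HJJ [[JJ1 JJ2] [HJd' [Hpr Hmx]]]]].
assert (Jdown : forall a b, J b -> ale a b -> J a).
{ intros a b Jb hab. apply JJ2 with b; [exact Jb|]. apply dual_le; exact hab. }
exists (fun x => ~ J x). split; [split|split; [|split]].
- intro h. apply (HJd' tp h). apply F2 with x0; [exact Fx0|apply ale_top].
- intros a b na nb h. destruct (Hpr a b h); auto.
- intros a b na hab Jb. apply na. eapply Jdown; eauto.
- intro h. apply h. apply HJJ. apply J2 with y0; [exact Jy0|apply ale_bot].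
- intros a b h. apply NNPP; intro hn. apply h. apply JJ1; apply NNPP; tauto.
- intros x Fx Jx. exact (HJd' x Jx Fx).
- intros x nQx Jx. exact (nQx (HJJ x Jx)).
- intros c d nJc nnJd. assert (Jd : J d) by (apply NNPP; exact nnJd).
  apply NNPP; intro nP.
  destruct (Hmx c nJc) as [q [Jq Fqc]].
  apply (HJd' (jn q d)); [apply JJ1; auto|].
  apply Hcl with (jn q c); [exact Fqc|].
  intro h. apply nP. apply (pf_le HP) with (ci (jn q c) (jn q d)); [exact h|].
  rewrite (coimp_join HA). rewrite coimp_le; [|apply ale_jL]. rewrite bot_join.
  apply coimp_anti2. apply ale_jR.
Qed.

End Alg.

Section GenTop.
Variables (X : SpData) (HT : is_topology (opens X)).

Lemma g_union2 (U V : pt X -> Prop) :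
  opens X U -> opens X V -> opens X (fun x => U x \/ V x).
Proof.
intros HU HV.
pose proof (top_union HT (F := fun W => W = U \/ W = V)) as H.
eapply (top_ext HT); [apply H|].
- intros W [->| ->]; assumption.
- intros x; split.
  + intros [W [[-> | ->] Hx]]; [left|right]; exact Hx.
  + intros [Hx|Hx]; [exists U|exists V]; auto.
Qed.

Lemma g_clopen_ext (U V : pt X -> Prop) :
  clopen X U -> (forall x, U x <-> V x) -> clopen X V.
Proof.
intros [H1 H2] E; split.
- exact (top_ext HT H1 E).
- apply (top_ext HT H2); intros x; rewrite (E x); tauto.
Qed.

Lemma g_clopen_compl (U : pt X -> Prop) : clopen X U -> clopen X (fun x => ~ U x).
Proof.
intros [H1 H2]; split; [exact H2|].
apply (top_ext HT H1); intros x; split; [tauto|].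
intros H; apply NNPP; exact H.
Qed.

Lemma g_clopen_inter (U V : pt X -> Prop) :
  clopen X U -> clopen X V -> clopen X (fun x => U x /\ V x).
Proof.
intros [U1 U2] [V1 V2]; split; [exact (top_inter HT U1 V1)|].
apply (top_ext HT (g_union2 U2 V2)); intros x; split.
- intros [H|H] [H1 H2]; tauto.
- intros H; destruct (classic (U x)); [right|left]; tauto.
Qed.

Lemma g_clopen_union (U V : pt X -> Prop) :
  clopen X U -> clopen X V -> clopen X (fun x => U x \/ V x).
Proof.
intros HU HV.
apply g_clopen_ext with (U := fun x => ~ (~ U x /\ ~ V x)).
- apply g_clopen_compl, g_clopen_inter; apply g_clopen_compl; assumption.
- intros x; split; [|tauto].
  intros H; destruct (classic (U x)); [left|right]; tauto.
Qed.

Lemma g_clopen_empty : clopen X (fun _ => False).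
Proof. split; [exact (top_empty HT)|]. apply (top_ext HT (top_full HT)); tauto. Qed.
Lemma g_clopen_full : clopen X (fun _ => True).
Proof. split; [exact (top_full HT)|]. apply (top_ext HT (top_empty HT)); tauto. Qed.

Lemma g_union_list {I : Type} (l : list I) (f : I -> pt X -> Prop) :
  (forall i, In i l -> clopen X (f i)) -> clopen X (fun x => exists i, In i l /\ f i x).
Proof.
induction l as [|i l IH]; intros H.
- apply g_clopen_ext with (fun _ => False); [apply g_clopen_empty|]. intros x; split; [tauto|].
  intros [i [[] _]].
- apply g_clopen_ext with (fun x => f i x \/ exists i', In i' l /\ f i' x).
  + apply g_clopen_union; [apply H; left; auto|apply IH; intros; apply H; right; auto].
  + intros x; split.
    * intros [h|[i' [h1 h2]]]; [exists i; split; [left|]; auto|exists i'; split; [right|]; auto].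
    * intros [i' [[<-|h1] h2]]; [left; auto|right; exists i'; auto].
Qed.

Lemma g_cc (HC : compact (opens X)) (C : pt X -> Prop) (HCc : opens X (fun x => ~ C x))
  (F : (pt X -> Prop) -> Prop) (HF : forall U, F U -> opens X U)
  (Hcov : forall x, C x -> exists U, F U /\ U x) :
  exists l, (forall U, In U l -> F U) /\ forall x, C x -> exists U, In U l /\ U x.
Proof.
set (F' := fun U => F U \/ (forall x, U x <-> ~ C x)).
destruct (HC F') as [l [Hl Hcl]].
- intros U [h|h]; [auto|]. apply (top_ext HT HCc). intros x; rewrite h; tauto.
- intros x. destruct (classic (C x)) as [h|h].
  + destruct (Hcov x h) as [U [FU Ux]]. exists U; split; [left|]; auto.
  + exists (fun x => ~ C x); split; [right; tauto|exact h].
- assert (G : forall l, (forall U, In U l -> F' U) -> exists l', (forall U, In U l' -> F U) /\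
     forall x, C x -> (exists U, In U l /\ U x) -> exists U, In U l' /\ U x).
  { induction l0 as [|U l0 IH]; intros H.
    - exists nil; split; [intros _ []|]. intros x _ [U [[] _]].
    - destruct IH as [l' [Hl1 Hl2]]; [intros; apply H; right; auto|].
      destruct (H U (or_introl eq_refl)) as [FU|EU].
      + exists (U :: l'); split.
        * intros V [<-|h]; auto.
        * intros x Cx [V [[<-|h] Vx]]; [exists U; split; [left|]; auto|].
          destruct (Hl2 x Cx (ex_intro _ V (conj h Vx))) as [W [h1 h2]]. exists W; split; [right|]; auto.
      + exists l'; split; [exact Hl1|].
        intros x Cx [V [[<-|h] Vx]]; [apply EU in Vx; contradiction|].
        apply Hl2; [auto|exists V; auto]. }
  destruct (G l Hl) as [l' [h1 h2]]. exists l'; split; [exact h1|].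
  intros x Cx; apply h2; auto.
Qed.

End GenTop.

Lemma PF_eq (A : AlgData) (P Q : PF A) :
  (forall a, proj1_sig P a <-> proj1_sig Q a) -> P = Q.
Proof.
destruct P as [P HP], Q as [Q HQ]; simpl; intro E.
assert (P = Q) by (apply functional_extensionality; intro a; apply propositional_extensionality; auto).
subst Q. f_equal. apply proof_irrelevance.
Qed.

Section XA.
Variables (A : AlgData) (HA : isWHB A).
Local Notation mt := (ameet A).
Local Notation jn := (ajoin A).
Local Notation im := (aimp A).
Local Notation ci := (acoimp A).
Local Notation bt := (abot A).
Local Notation tp := (atop A).
Implicit Types a b c d x y q : A.

Lemma go_top : is_topology (@gen_opens A).
Proof.
split.
- intros U V HU E O HO Hs. exact (top_ext HO (HU O HO Hs) E).
- intros O HO _; exact (top_empty HO).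
- intros O HO _; exact (top_full HO).
- intros U V HU HV O HO Hs. exact (top_inter HO (HU O HO Hs) (HV O HO Hs)).
- intros F HF O HO Hs. apply (top_union HO). intros U FU; exact (HF U FU O HO Hs).
Qed.

Lemma sig_open a : gen_opens (fun P : PF A => proj1_sig P a).
Proof. intros O HO Hs; apply Hs; left; exists a; tauto. Qed.
Lemma sigc_open a : gen_opens (fun P : PF A => ~ proj1_sig P a).
Proof. intros O HO Hs; apply Hs; right; exists a; tauto. Qed.
Lemma sig_clopen a : clopen (Xd A) (fun P : PF A => proj1_sig P a).
Proof. split; [apply sig_open|apply sigc_open]. Qed.

Definition cov (P : PF A) (p : A * A) := proj1_sig P (fst p) /\ ~ proj1_sig P (snd p).

Lemma basic_open a b : gen_opens (fun P : PF A => cov P (a, b)).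
Proof. apply (top_inter go_top); [apply sig_open|apply sigc_open]. Qed.

Lemma nbhd (V : PF A -> Prop) : gen_opens V ->
  forall P, V P -> exists a b, cov P (a, b) /\ forall Q, cov Q (a, b) -> V Q.
Proof.
intro HV. apply HV.
- split.
  + intros U W HU E P WP. apply E in WP. destruct (HU P WP) as [a [b [h1 h2]]].
    exists a, b; split; [auto|]. intros Q hQ; apply E; auto.
  + intros P [].
  + intros P _. exists tp, bt. split; [split; [apply (pf_top (proj2_sig P))|apply (pf_proper (proj2_sig P))]|].
    intros; exact I.
  + intros U W HU HW P [UP WP].
    destruct (HU P UP) as [a [b [[h1 h2] h3]]]. destruct (HW P WP) as [a' [b' [[h1' h2'] h3']]].
    exists (mt a a'), (jn b b'). split; [split|].
    * simpl. apply (pf_m (proj2_sig P)); auto.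
    * simpl. intro h. destruct (pf_jE (proj2_sig P) h); auto.
    * intros Q [q1 q2]; simpl in q1, q2. destruct (pf_mE HA (proj2_sig Q) q1).
      split; [apply h3|apply h3']; split; simpl; auto; intro; apply q2; apply (pf_jI HA (proj2_sig Q)); auto.
  + intros F HF P [U [FU UP]]. destruct (HF U FU P UP) as [a [b [h1 h2]]].
    exists a, b; split; [auto|]. intros Q hQ; exists U; auto.
- intros W [[a Ha]|[a Ha]] P WP.
  + exists a, bt. split; [split; [apply Ha; auto|apply (pf_proper (proj2_sig P))]|].
    intros Q [h _]; apply Ha; auto.
  + exists tp, a. split; [split; [apply (pf_top (proj2_sig P))|apply Ha; auto]|].
    intros Q [_ h]; apply Ha; auto.
Qed.

Definition lmeet (l : list A) := fold_right mt tp l.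
Definition ljoin (l : list A) := fold_right jn bt l.

Lemma lmeet_app l1 l2 : lmeet (l1 ++ l2) = mt (lmeet l1) (lmeet l2).
Proof.
induction l1 as [|a l1 IH]; simpl; [rewrite top_meet; auto|]. rewrite IH, (meetA HA); auto.
Qed.
Lemma ljoin_app l1 l2 : ljoin (l1 ++ l2) = jn (ljoin l1) (ljoin l2).
Proof.
induction l1 as [|a l1 IH]; simpl; [rewrite bot_join; auto|]. rewrite IH, (joinA HA); auto.
Qed.
Lemma pf_lmeet (P : A -> Prop) (HP : prime_filter P) l : (forall a, In a l -> P a) -> P (lmeet l).
Proof.
induction l as [|a l IH]; simpl; intro h; [apply (pf_top HP)|].
apply (pf_m HP); [apply h; auto|apply IH; auto].
Qed.
Lemma pf_ljoin (P : A -> Prop) (HP : prime_filter P) l : P (ljoin l) -> exists a, In a l /\ P a.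
Proof.
induction l as [|a l IH]; simpl; intro h; [destruct (pf_proper HP h)|].
destruct (pf_jE HP h) as [h1|h1]; [exists a; auto|destruct (IH h1) as [b [h2 h3]]; exists b; auto].
Qed.

Lemma XA_compact : compact (@gen_opens A).
Proof.
intros F HF Hcov. apply NNPP; intro Hno.
set (K := fun p : A * A => exists U, F U /\ forall Q, cov Q p -> U Q).
assert (Kcov : forall P, exists p, K p /\ cov P p).
{ intros P. destruct (Hcov P) as [U [FU UP]]. destruct (nbhd (HF U FU) UP) as [a [b [h1 h2]]].
  exists (a, b); split; [exists U; auto|auto]. }
set (nfc := fun M : A * A -> Prop => forall l, (forall p, In p l -> M p) ->
               exists P, forall p, In p l -> ~ cov P p).
assert (HK : nfc K).
{ intros l Hl. apply NNPP; intro hn.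
  assert (G : forall l, (forall p, In p l -> K p) -> exists l', (forall U, In U l' -> F U) /\
            forall Q, (exists p, In p l /\ cov Q p) -> exists U, In U l' /\ U Q).
  { induction l0 as [|p l0 IH]; intro H.
    - exists nil; split; [intros _ []|intros Q [p [[] _]]].
    - destruct IH as [l' [h1 h2]]; [intros; apply H; right; auto|].
      destruct (H p (or_introl eq_refl)) as [U [FU HU]].
      exists (U :: l'); split; [intros V [<-|h]; auto|].
      intros Q [p' [[<-|h] c]]; [exists U; split; [left|]; auto|].
      destruct (h2 Q (ex_intro _ p' (conj h c))) as [W [w1 w2]]; exists W; split; [right|]; auto. }
  destruct (G l Hl) as [l' [h1 h2]]. apply Hno. exists l'; split; [auto|].
  intros Q. apply h2. apply NNPP; intro hq. apply hn. exists Q. intros p hp cp. apply hq; eauto. }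
destruct (@zorn_sets (A * A) nfc K HK) as [M [HM [HKM Hmax]]].
{ intros C HC [X0 CX0] Hch l Hl.
  assert (G : forall l, (forall p, In p l -> exists X, C X /\ X p) -> exists X, C X /\ forall p, In p l -> X p).
  { induction l0 as [|p l0 IH]; intro H.
    - exists X0; split; [auto|intros _ []].
    - destruct IH as [X [CX HX]]; [intros; apply H; right; auto|].
      destruct (H p (or_introl eq_refl)) as [Y [CY Yp]].
      destruct (Hch X Y CX CY) as [h|h].
      + exists Y; split; [auto|]. intros p' [<-|hp]; auto.
      + exists X; split; [auto|]. intros p' [<-|hp]; auto. }
  destruct (G l Hl) as [X [CX HX]]. exact (HC X CX l HX). }
assert (Hext : forall x : A * A, ~ M x -> exists l', (forall p, In p l' -> M p) /\
           forall P, cov P x \/ exists p, In p l' /\ cov P p).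
{ intros x nMx.
  assert (hN : ~ nfc (fun p => M p \/ p = x)).
  { intro hN. apply nMx. apply (Hmax _ hN); [intros; left; auto|right; auto]. }
  apply NNPP; intro hn. apply hN. intros l Hl.
  assert (G : forall l, (forall p, In p l -> M p \/ p = x) -> exists l', (forall p, In p l' -> M p) /\
            forall P, (exists p, In p l /\ cov P p) -> cov P x \/ exists p, In p l' /\ cov P p).
  { induction l0 as [|p l0 IH]; intro H.
    - exists nil; split; [intros _ []|intros P [p [[] _]]].
    - destruct IH as [l' [h1 h2]]; [intros; apply H; right; auto|].
      destruct (H p (or_introl eq_refl)) as [Mp| ->].
      + exists (p :: l'); split; [intros q [<-|h]; auto|].
        intros P [q [[<-|h] c]]; [right; exists p; split; [left|]; auto|].
        destruct (h2 P (ex_intro _ q (conj h c))) as [h3|[r [r1 r2]]]; [left; auto|right; exists r; split; [right|]; auto].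
      + exists l'; split; [auto|].
        intros P [q [[<-|h] c]]; [left; auto|]. apply h2; eauto. }
  destruct (G l Hl) as [l' [h1 h2]].
  apply NNPP; intro hq. apply hn. exists l'; split; [auto|].
  intros P. apply h2. apply NNPP; intro hp. apply hq. exists P. intros p hp' cp. apply hp; eauto. }
assert (Hsplit : forall a b, M (a, b) -> M (a, bt) \/ M (tp, b)).
{ intros a b Mab. apply NNPP; intro hn.
  destruct (Hext (a, bt)) as [l1 [h11 h12]]; [tauto|].
  destruct (Hext (tp, b)) as [l2 [h21 h22]]; [tauto|].
  destruct (HM ((a, b) :: l1 ++ l2)) as [P HP].
  - intros p [<-|h]; [auto|]. apply in_app_iff in h; destruct h; auto.
  - destruct (classic (cov P (a, b))) as [c|c]; [apply (HP (a, b)); [left|]; auto|].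
    unfold cov in c; simpl in c.
    destruct (classic (proj1_sig P a)) as [Pa|nPa].
    + assert (Pb : proj1_sig P b) by (apply NNPP; tauto).
      destruct (h22 P) as [[_ h]|[p [p1 p2]]]; [simpl in h; tauto|].
      apply (HP p); [right; apply in_app_iff; right; auto|auto].
    + destruct (h12 P) as [[h _]|[p [p1 p2]]]; [simpl in h; tauto|].
      apply (HP p); [right; apply in_app_iff; left; auto|auto]. }
assert (Hsub : forall P : PF A, (exists a, M (a, bt) /\ proj1_sig P a) \/ (exists b, M (tp, b) /\ ~ proj1_sig P b)).
{ intros P. destruct (Kcov P) as [[a b] [Kp [c1 c2]]]. simpl in c1, c2.
  destruct (Hsplit a b (HKM _ Kp)); [left; exists a|right; exists b]; auto. }
set (G := fun x => exists lb, (forall b, In b lb -> M (tp, b)) /\ ale (lmeet lb) x).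
set (I := fun x => exists la, (forall a, In a la -> M (a, bt)) /\ ale x (ljoin la)).
destruct (@pft A HA G I) as [Q [HQ [HGQ [HQI _]]]].
- exists tp, nil. split; [intros _ []|apply ale_refl; auto].
- split.
  + intros x y [l1 [h1 h2]] [l2 [h3 h4]]. exists (l1 ++ l2). split.
    * intros b hb; apply in_app_iff in hb; destruct hb; auto.
    * rewrite lmeet_app. apply ale_mono_m; auto.
  + intros x y [l1 [h1 h2]] hxy. exists l1; split; [auto|eapply ale_trans; eauto].
- exists bt, nil. split; [intros _ []|apply ale_refl; auto].
- split.
  + intros x y [l1 [h1 h2]] [l2 [h3 h4]]. exists (l1 ++ l2). split.
    * intros b hb; apply in_app_iff in hb; destruct hb; auto.
    * rewrite ljoin_app. apply ale_mono_j; auto.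
  + intros x y [l1 [h1 h2]] hxy. exists l1; split; [auto|eapply ale_trans; eauto].
- intros x [lb [h1 h2]] [la [h3 h4]].
  destruct (HM (map (fun b => (tp, b)) lb ++ map (fun a => (a, bt)) la)) as [P HP].
  + intros p hp. apply in_app_iff in hp. destruct hp as [hp|hp]; apply in_map_iff in hp;
      destruct hp as [z [<- hz]]; auto.
  + assert (Plb : proj1_sig P (lmeet lb)).
    { apply (pf_lmeet (proj2_sig P)). intros b hb. apply NNPP; intro nb.
      apply (HP (tp, b)); [apply in_app_iff; left; apply in_map_iff; exists b; auto|].
      split; [apply (pf_top (proj2_sig P))|auto]. }
    assert (Pla : proj1_sig P (ljoin la)).
    { apply (pf_le (proj2_sig P)) with x; [|auto]. apply (pf_le (proj2_sig P)) with (lmeet lb); auto. }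
    destruct (pf_ljoin (proj2_sig P) Pla) as [a [ha Pa]].
    apply (HP (a, bt)); [apply in_app_iff; right; apply in_map_iff; exists a; auto|].
    split; [auto|apply (pf_proper (proj2_sig P))].
- destruct (Hsub (exist _ Q HQ)) as [[a [Ma Qa]]|[b [Mb nQb]]]; simpl in *.
  + apply (HQI a Qa). exists (a :: nil). split; [intros a' [<-|[]]; auto|]. apply (ale_jL HA).
  + apply nQb, HGQ. exists (b :: nil). split; [intros b' [<-|[]]; auto|]. apply (ale_mL HA).
Qed.

End XA.

Section XA2.
Variables (A : AlgData) (HA : isWHB A).
Local Notation mt := (ameet A).
Local Notation jn := (ajoin A).
Local Notation im := (aimp A).
Local Notation ci := (acoimp A).
Local Notation bt := (abot A).
Local Notation tp := (atop A).
Implicit Types a b c d x y q : A.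

Lemma key_R (P : PF A) a b : ~ proj1_sig P (im a b) ->
  exists Q : PF A, sR (Xd A) P Q /\ proj1_sig Q a /\ ~ proj1_sig Q b.
Proof.
intro nP. destruct P as [P HP]; simpl in *.
destruct (@R_constr A HA P (fun x => ale a x) (fun x => P (im x b)) HP) as [Q [HQ [h1 [h2 h3]]]].
- exists a; apply ale_refl; auto.
- split; [intros x y h h'; apply ale_glb; auto|intros x y h h'; eapply ale_trans; eauto].
- exists b. rewrite (imp_refl HA). apply (pf_top HP).
- split.
  + intros x y h h'. rewrite (imp_join HA). apply (pf_m HP); auto.
  + intros x y h h'. apply (pf_le HP) with (im y b); [auto|apply imp_anti1; auto].
- intros c d h h'. apply (pf_le HP) with (mt (im c d) (im d b)); [apply (pf_m HP); auto|apply imp_tr; auto].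
- intros x h h'. apply nP. apply (pf_le HP) with (im x b); [auto|apply imp_anti1; auto].
- exists (exist _ Q HQ); simpl. split; [exact h3|split].
  + apply h1; apply ale_refl; auto.
  + intro h. apply (h2 b h). rewrite (imp_refl HA). apply (pf_top HP).
Qed.

Lemma key_S (P : PF A) a b : proj1_sig P (ci a b) ->
  exists Q : PF A, sS (Xd A) P Q /\ proj1_sig Q a /\ ~ proj1_sig Q b.
Proof.
intro Pab. destruct P as [P HP]; simpl in *.
destruct (@S_constr A HA P (fun x => ~ P (ci a x)) (fun x => ale x b) HP) as [Q [HQ [h1 [h2 h3]]]].
- exists a. rewrite (coimp_refl HA). apply (pf_proper HP).
- split.
  + intros x y h h' h''. rewrite (coimp_meet HA) in h''. destruct (pf_jE HP h''); auto.
  + intros x y h h' h''. apply h. apply (pf_le HP) with (ci a y); [auto|apply coimp_anti2; auto].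
- exists b; apply ale_refl; auto.
- split.
  + intros x y h h'; apply ale_lub; auto.
  + intros x y h h'; eapply ale_trans; eauto.
- intros x y h h' h''.
  assert (h4 : P (jn (ci a x) (ci x y))) by (apply (pf_le HP) with (ci a y); [exact h''|apply coimp_tr; auto]).
  destruct (pf_jE HP h4); auto.
- intros x h h'. apply h. apply (pf_le HP) with (ci a b); [auto|apply coimp_anti2; auto].
- exists (exist _ Q HQ); simpl. split; [exact h3|split].
  + apply h1. rewrite (coimp_refl HA). apply (pf_proper HP).
  + intro h. apply (h2 b h). apply ale_refl; auto.
Qed.

Lemma open_cond (Cnd : A -> A -> Prop) :
  gen_opens (fun Q : PF A => exists a b, Cnd a b /\ cov Q (a, b)).
Proof.
eapply (top_ext (go_top A)).
- apply (top_union (go_top A) (F := fun V => exists a b, Cnd a b /\ forall Q, V Q <-> cov Q (a, b))).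
  intros V [a [b [_ E]]]. apply (top_ext (go_top A) (basic_open a b)). intro Q; rewrite E; tauto.
- intros Q; split.
  + intros [V [[a [b [h E]]] VQ]]. exists a, b; split; [auto|apply E; auto].
  + intros [a [b [h c]]]. exists (fun Q => cov Q (a, b)); split; [exists a, b; split; [auto|tauto]|auto].
Qed.

Lemma clopen_fin (U : PF A -> Prop) : clopen (Xd A) U ->
  exists l : list (A * A), forall Q, U Q <-> exists p, In p l /\ cov Q p.
Proof.
intros [HU1 HU2].
destruct (@g_cc (Xd A) (go_top A) (XA_compact HA) U HU2
   (fun V => exists a b, (forall Q, V Q <-> cov Q (a, b)) /\ (forall Q, cov Q (a, b) -> U Q)))
  as [lV [hl1 hl2]].
- intros V [a [b [E _]]]. apply (top_ext (go_top A) (basic_open a b)). intro Q; rewrite E; tauto.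
- intros Q UQ. destruct (nbhd HA HU1 UQ) as [a [b [h1 h2]]].
  exists (fun Q => cov Q (a, b)); split; [exists a, b; split; [tauto|auto]|auto].
- assert (G : forall lV, (forall V, In V lV -> exists a b, (forall Q, V Q <-> cov Q (a, b)) /\ (forall Q, cov Q (a, b) -> U Q)) ->
     exists l, (forall p, In p l -> forall Q, cov Q p -> U Q) /\
        forall Q, (exists V, In V lV /\ V Q) -> exists p, In p l /\ cov Q p).
  { induction lV0 as [|V lV0 IH]; intro H.
    - exists nil; split; [intros _ []|intros Q [V [[] _]]].
    - destruct IH as [l [h1 h2]]; [intros; apply H; right; auto|].
      destruct (H V (or_introl eq_refl)) as [a [b [E HV]]].
      exists ((a, b) :: l); split.
      + intros p [hp|hp]; [subst p; exact HV|exact (h1 p hp)].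
      + intros Q [W [[<-|hW] WQ]]; [exists (a, b); split; [left|apply E]; auto|].
        destruct (h2 Q (ex_intro _ W (conj hW WQ))) as [p [p1 p2]]. exists p; split; [right|]; auto. }
  destruct (G lV hl1) as [l [h1 h2]]. exists l. intros Q; split.
  + intro UQ; apply h2, hl2, UQ.
  + intros [p [p1 p2]]; exact (h1 p p1 Q p2).
Qed.

Lemma XA_isWHBS : isWHBS (Xd A).
Proof.
split.
- exact (go_top A).
- exact (XA_compact HA).
- intros x a h; exact h.
- intros x y z h1 h2 a h; auto.
- intros x y h1 h2. apply PF_eq. intro a; split; auto.
- intros x y h. simpl in h.
  destruct (not_all_ex_not _ _ h) as [a ha].
  exists (fun P : PF A => proj1_sig P a). split; [apply sig_clopen|split; [|tauto]].
  intros P P' hP Pa; apply hP; auto.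
- intros x y z h1 h2 a b hab. apply h2, h1, hab.
- intros x y z h1 h2 a b ha hb. apply h1, h2; auto.
- intros P Q. simpl. split.
  + intros h a b Qab Pa. apply (pf_le (proj2_sig P)) with (mt a (ci (im a b) bt)).
    * apply (pf_m (proj2_sig P)); [auto|]. apply h; [auto|apply (pf_proper (proj2_sig Q))].
    * apply (E1 HA).
  + intros h a b Qa nQb. apply (h (atop A)); [|apply (pf_top (proj2_sig P))].
    pose proof (pf_le (proj2_sig Q) Qa (E2 HA a b)) as h'.
    destruct (pf_jE (proj2_sig Q) h'); tauto.
- intros P. simpl.
  apply (top_ext (go_top A) (open_cond (fun a b => proj1_sig P (im a b)))).
  intros Q; split.
  + intros [a [b [h [c1 c2]]]] hR. apply c2, (hR a b); auto.
  + intro hR. apply NNPP; intro hn. apply hR. intros a b h1 h2. apply NNPP; intro h3.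
    apply hn. exists a, b. split; [auto|split; auto].
- intros P. simpl.
  apply (top_ext (go_top A) (open_cond (fun a b => ~ proj1_sig P (ci a b)))).
  intros Q; split.
  + intros [a [b [h [c1 c2]]]] hS. apply h, hS; auto.
  + intro hS. apply NNPP; intro hn. apply hS. intros a b h1 h2. apply NNPP; intro h3.
    apply hn. exists a, b. split; [auto|split; auto].
- intros U HU. destruct (clopen_fin HU) as [l E].
  apply (@g_clopen_ext (Xd A) (go_top A) (fun Q : PF A => exists p, In p l /\ ~ proj1_sig Q (im (fst p) (snd p)))).
  + apply (@g_union_list (Xd A) (go_top A)). intros p _. apply (@g_clopen_compl (Xd A) (go_top A)). apply sig_clopen.
  + intros Q. unfold preR. split.
    * intros [[a b] [hp hn]]. simpl in hn. destruct (key_R hn) as [Q' [h1 [h2 h3]]].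
      exists Q'. split; [auto|]. apply E. exists (a, b); split; [auto|split; auto].
    * intros [Q' [hR UQ]]. apply E in UQ. destruct UQ as [[a b] [hp [c1 c2]]].
      exists (a, b); split; [auto|]. simpl. intro h. apply c2. exact (hR a b h c1).
- intros U HU. destruct (clopen_fin HU) as [l E].
  apply (@g_clopen_ext (Xd A) (go_top A) (fun Q : PF A => exists p, In p l /\ proj1_sig Q (ci (fst p) (snd p)))).
  + apply (@g_union_list (Xd A) (go_top A)). intros p _. apply sig_clopen.
  + intros Q. unfold preS. split.
    * intros [[a b] [hp hn]]. simpl in hn. destruct (key_S hn) as [Q' [h1 [h2 h3]]].
      exists Q'. split; [auto|]. apply E. exists (a, b); split; [auto|split; auto].
    * intros [Q' [hS UQ]]. apply E in UQ. destruct UQ as [[a b] [hp [c1 c2]]].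
      exists (a, b); split; [auto|]. simpl. exact (hS a b c1 c2).
Qed.

End XA2.

Lemma Deq (X : WHBSpace) (U V : Dcar X) :
  (forall x, proj1_sig U x <-> proj1_sig V x) -> U = V.
Proof.
destruct U as [U HU], V as [V HV]; simpl; intro E.
assert (U = V) by (apply functional_extensionality; intro a; apply propositional_extensionality; auto).
subst V. f_equal. apply proof_irrelevance.
Qed.

Lemma D_isWHB (X : WHBSpace) : isWHB (Dd X).
Proof.
pose proof (wsp_ax X) as HX.
split; intros; try unfold ale; apply Deq; intro x; simpl.
- tauto.
- tauto.
- tauto.
- tauto.
- tauto.
- tauto.
- tauto.
- tauto.
- tauto.
- split; auto.
- split; [intros h; split; intros y r u; apply h; auto|intros [h1 h2] y r u; split; [apply h1|apply h2]; auto].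
- split; [intros h; split; intros y r u; apply h; auto|intros [h1 h2] y r [u|u]; [apply h1|apply h2]; auto].
- split; [intros [[h1 h2] _]; split; auto|intros h; split; [exact h|]].
  destruct h as [h1 h2]. intros y r u. apply h2; [auto|apply h1; auto].
- split; [intros [y [_ [h1 h2]]]; auto|tauto].
- split; [intros [y [r [[u|u] v]]]; [left|right]; exists y; auto|intros [[y [r [u v]]]|[y [r [u v]]]]; exists y; auto].
- split; [intros [y [r [u v]]]; destruct (classic (proj1_sig b y)); [right|left]; exists y; split; auto; tauto
         |intros [[y [r [u v]]]|[y [r [u v]]]]; exists y; split; auto; tauto].
- split; [intros [h _]; exact h|intros h; split; [exact h|]].
  destruct h as [y [r [u v]]]. destruct (classic (proj1_sig b y)); [right|left]; exists y; auto.
- split; [intros [h _]; exact h|intros h; split; [exact h|]].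
  destruct h as [h1 [y [r [u _]]]]. apply (S_conv HX) in r. exact (u x r h1).
- split; [intros [h _]; exact h|intros h; split; [exact h|]].
  destruct (classic (proj1_sig b x)) as [hb|hb]; [left; auto|right].
  intros y r _. exists x. split; [apply (S_conv HX); auto|auto].
Qed.

Section XH.
Variables (A1 A2 : AlgData) (h : A1 -> A2) (HA1 : isWHB A1) (HA2 : isWHB A2) (Hh : hom h).

Lemma hom_le (a b : A1) : ale a b -> ale (h a) (h b).
Proof. unfold ale; intro e. rewrite <- (hom_meet Hh), e. reflexivity. Qed.

Lemma pre_pf (P : PF A2) : prime_filter (fun a => proj1_sig P (h a)).
Proof.
destruct P as [P HP]; simpl. split.
- rewrite (hom_top Hh). apply (pf_top HP).
- intros a b ha hb. rewrite (hom_meet Hh). apply (pf_m HP); auto.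
- intros a b ha hab. apply (pf_le HP) with (h a); [auto|apply hom_le; auto].
- rewrite (hom_bot Hh). apply (pf_proper HP).
- intros a b hab. rewrite (hom_join Hh) in hab. apply (pf_jE HP hab).
Qed.

Definition phiX (P : PF A2) : PF A1 := exist _ _ (pre_pf P).

Lemma phiX_mor : whbs_morphism (Xd A2) (Xd A1) phiX.
Proof.
split.
- intros U HU. simpl in HU |- *. apply HU.
  + split.
    * intros V W HV E. apply (top_ext (go_top A2) HV). intro x; apply E.
    * apply (top_empty (go_top A2)).
    * apply (top_full (go_top A2)).
    * intros V W HV HW. apply (top_inter (go_top A2) HV HW).
    * intros F HF. eapply (top_ext (go_top A2)).
      -- apply (top_union (go_top A2) (F := fun V => exists W, F W /\ forall x, V x <-> W (phiX x))).
         intros V [W [FW E]]. apply (top_ext (go_top A2) (HF W FW)). intro x; rewrite E; tauto.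
      -- intro x; split.
         ++ intros [V [[W [FW E]] Vx]]. exists W; split; [auto|apply E; auto].
         ++ intros [W [FW Wx]]. exists (fun x => W (phiX x)); split; [exists W; split; [auto|tauto]|auto].
  + intros W [[a Ha]|[a Ha]].
    * apply (top_ext (go_top A2) (sig_open (h a))). intro x; rewrite Ha; simpl; tauto.
    * apply (top_ext (go_top A2) (sigc_open (h a))). intro x; rewrite Ha; simpl; tauto.
- intros x y hxy a ha. simpl in *. auto.
- intros x y hR a b h1 h2. simpl in *. rewrite (hom_imp Hh) in h1. apply (hR _ _ h1 h2).
- intros [P HP] z hR. simpl in hR.
  destruct (@R_constr A2 HA2 P (fun x => exists q, proj1_sig z q /\ ale (h q) x)
             (fun x => exists c, ~ proj1_sig z c /\ P (aimp A2 x (h c))) HP) as [Q [HQ [h1 [h2 h3]]]].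
  + exists (h (atop A1)), (atop A1). split; [apply (pf_top (proj2_sig z))|apply ale_refl; auto].
  + split.
    * intros x y [q [zq hq]] [q' [zq' hq']]. exists (ameet A1 q q'). split; [apply (pf_m (proj2_sig z)); auto|].
      rewrite (hom_meet Hh). apply ale_mono_m; auto.
    * intros x y [q [zq hq]] hxy. exists q; split; [auto|eapply ale_trans; eauto].
  + exists (h (abot A1)), (abot A1). split; [apply (pf_proper (proj2_sig z))|].
    rewrite (imp_refl HA2). apply (pf_top HP).
  + split.
    * intros x y [c [zc hc]] [c' [zc' hc']]. exists (ajoin A1 c c'). split.
      -- intro hz. destruct (pf_jE (proj2_sig z) hz); auto.
      -- rewrite (imp_join HA2). apply (pf_m HP).
         ++ apply (pf_le HP) with (aimp A2 x (h c)); [auto|apply imp_mono2; auto; apply hom_le, ale_jL; auto].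
         ++ apply (pf_le HP) with (aimp A2 y (h c')); [auto|apply imp_mono2; auto; apply hom_le, ale_jR; auto].
    * intros x y [c [zc hc]] hxy. exists c; split; [auto|].
      apply (pf_le HP) with (aimp A2 y (h c)); [auto|apply imp_anti1; auto].
  + intros c d [c' [zc hc]] hcd. exists c'; split; [auto|].
    apply (pf_le HP) with (ameet A2 (aimp A2 c d) (aimp A2 d (h c'))); [apply (pf_m HP); auto|apply imp_tr; auto].
  + intros x [q [zq hq]] [c [zc hc]]. apply zc. apply (hR q c); [|auto]. simpl.
    rewrite (hom_imp Hh). apply (pf_le HP) with (aimp A2 x (h c)); [auto|apply imp_anti1; auto].
  + exists (exist _ Q HQ). split; [exact h3|].
    apply PF_eq. intro a; simpl. split.
    * intro Qa. apply NNPP; intro za. apply (h2 (h a) Qa). exists a; split; [auto|].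
      rewrite (imp_refl HA2). apply (pf_top HP).
    * intro za. apply h1. exists a; split; [auto|apply ale_refl; auto].
- intros x y hS a b h1 h2. simpl in *. rewrite (hom_coimp Hh). apply hS; auto.
- intros [P HP] z hS. simpl in hS.
  destruct (@S_constr A2 HA2 P (fun x => exists q, proj1_sig z q /\ ~ P (acoimp A2 (h q) x))
             (fun x => exists c, ~ proj1_sig z c /\ ale x (h c)) HP) as [Q [HQ [h1 [h2 h3]]]].
  + exists (h (atop A1)), (atop A1). split; [apply (pf_top (proj2_sig z))|].
    rewrite (coimp_refl HA2). apply (pf_proper HP).
  + split.
    * intros x y [q [zq hq]] [q' [zq' hq']]. exists (ameet A1 q q'). split; [apply (pf_m (proj2_sig z)); auto|].
      rewrite (coimp_meet HA2). intro hj. destruct (pf_jE HP hj) as [hj'|hj'].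
      -- apply hq. apply (pf_le HP) with (acoimp A2 (h (ameet A1 q q')) x); [auto|].
         apply coimp_mono1; auto. apply hom_le, ale_mL; auto.
      -- apply hq'. apply (pf_le HP) with (acoimp A2 (h (ameet A1 q q')) y); [auto|].
         apply coimp_mono1; auto. apply hom_le, ale_mR; auto.
    * intros x y [q [zq hq]] hxy. exists q; split; [auto|]. intro hp. apply hq.
      apply (pf_le HP) with (acoimp A2 (h q) y); [auto|apply coimp_anti2; auto].
  + exists (h (abot A1)), (abot A1). split; [apply (pf_proper (proj2_sig z))|apply ale_refl; auto].
  + split.
    * intros x y [c [zc hc]] [c' [zc' hc']]. exists (ajoin A1 c c'). split.
      -- intro hz. destruct (pf_jE (proj2_sig z) hz); auto.
      -- rewrite (hom_join Hh). apply ale_mono_j; auto.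
    * intros x y [c [zc hc]] hxy. exists c; split; [auto|eapply ale_trans; eauto].
  + intros x y [q [zq hq]] hxy. exists q; split; [auto|]. intro hp.
    assert (hp' : P (ajoin A2 (acoimp A2 (h q) x) (acoimp A2 x y))) by
      (apply (pf_le HP) with (acoimp A2 (h q) y); [exact hp|apply coimp_tr; auto]).
    destruct (pf_jE HP hp'); auto.
  + intros x [q [zq hq]] [c [zc hc]]. apply hq.
    apply (pf_le HP) with (acoimp A2 (h q) (h c)); [|apply coimp_anti2; auto].
    rewrite <- (hom_coimp Hh). apply (hS q c); auto.
  + exists (exist _ Q HQ). split; [exact h3|].
    apply PF_eq. intro a; simpl. split.
    * intro Qa. apply NNPP; intro za. apply (h2 (h a) Qa). exists a; split; [auto|apply ale_refl; auto].
    * intro za. apply h1. exists a; split; [auto|].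
      rewrite (coimp_refl HA2). apply (pf_proper HP).
Qed.

End XH.

Section DM.
Variables (X1 X2 : WHBSpace) (f : pt X1 -> pt X2) (Hf : whbs_morphism X1 X2 f).

Lemma pre_cu (U : Dcar X2) : cu (fun x => proj1_sig U (f x)).
Proof.
destruct U as [U [[HU1 HU2] HU3]]; simpl. split; [split|].
- exact (mor_cont Hf HU1).
- exact (mor_cont Hf HU2).
- intros x y hxy Ux. apply (HU3 (f x)); [apply (mor_mono Hf)|]; auto.
Qed.

Definition psiD (U : Dcar X2) : Dcar X1 := exist _ _ (pre_cu U).

Lemma psiD_hom : @hom (Dd X2) (Dd X1) psiD.
Proof.
split; intros; apply Deq; intro x; simpl; try tauto.
- split.
  + intros h y r u. apply h; [apply (mor_R_forth Hf)|]; auto.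
  + intros h z r u. destruct (mor_R_back Hf r) as [y [r' <-]]. apply h; auto.
- split.
  + intros [z [r u]]. destruct (mor_S_back Hf r) as [y [r' <-]]. exists y; auto.
  + intros [y [r u]]. exists (f y). split; [apply (mor_S_forth Hf)|]; auto.
Qed.
End DM.

Section Sig.
Variables (A : AlgData) (HA : isWHB A) (HX : isWHBS (Xd A)).

Lemma sig_cu (a : A) : @cu (XWHBS HX) (fun P : PF A => proj1_sig P a).
Proof.
split; [exact (sig_clopen a)|]. intros P Q h Pa; apply h; auto.
Qed.

Definition sigA (a : A) : Dcar (XWHBS HX) := exist _ _ (sig_cu a).

Lemma sep (a b : A) : ~ ale a b -> exists P : PF A, proj1_sig P a /\ ~ proj1_sig P b.
Proof.
intro nab.
destruct (@pft A HA (fun x => ale a x) (fun x => ale x b)) as [Q [HQ [h1 [h2 _]]]].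
- exists a; apply ale_refl; auto.
- split; [intros x y h h'; apply ale_glb; auto|intros x y h h'; eapply ale_trans; eauto].
- exists b; apply ale_refl; auto.
- split; [intros x y h h'; apply ale_lub; auto|intros x y h h'; eapply ale_trans; eauto].
- intros x h h'. apply nab. eapply ale_trans; eauto.
- exists (exist _ Q HQ); simpl. split; [apply h1; apply ale_refl; auto|].
  intro h. apply (h2 b h). apply ale_refl; auto.
Qed.

Lemma sigA_inj (a b : A) : sigA a = sigA b -> a = b.
Proof.
intro e.
assert (E : forall P : PF A, proj1_sig P a <-> proj1_sig P b).
{ intro P. change (proj1_sig (sigA a) P <-> proj1_sig (sigA b) P). rewrite e; tauto. }
apply (ale_anti HA); apply NNPP; intro n; destruct (sep n) as [P [h1 h2]]; apply h2, E, h1.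
Qed.

Lemma sigA_hom : @hom A (Dd (XWHBS HX)) sigA.
Proof.
split; intros; apply Deq; intro P; simpl.
- split; [intro h; exact (pf_mE HA (proj2_sig P) h)|intros [h1 h2]; apply (pf_m (proj2_sig P)); auto].
- split; [intro h; exact (pf_jE (proj2_sig P) h)|intro h; apply (pf_jI HA (proj2_sig P)); auto].
- split.
  + intros h Q r qa. exact (r a b h qa).
  + intro h. apply NNPP; intro n. destruct (key_R HA n) as [Q [r [qa qb]]]. apply qb, h; auto.
- split.
  + intro h. destruct (key_S HA h) as [Q [r [qa qb]]]. exists Q; auto.
  + intros [Q [r [qa qb]]]. exact (r a b qa qb).
- split; [apply (pf_proper (proj2_sig P))|tauto].
- split; [tauto|intros _; apply (pf_top (proj2_sig P))].
Qed.

Lemma sigA_surj (U : Dcar (XWHBS HX)) : exists a, sigA a = U.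
Proof.
destruct U as [U [[HU1 HU2] HU3]].
assert (Hc := XA_compact HA). assert (HT := go_top A).
assert (St1 : forall P : PF A, U P -> exists a, proj1_sig P a /\ forall Q : PF A, proj1_sig Q a -> U Q).
{ intros P UP.
  destruct (@g_cc (Xd A) HT Hc (fun Q : PF A => ~ U Q)) with
    (F := fun V : PF A -> Prop => exists a, proj1_sig P a /\ forall Q : PF A, V Q <-> ~ proj1_sig Q a) as [l [hl1 hl2]].
  - apply (top_ext HT HU1). intro Q; split; [tauto|apply NNPP].
  - intros V [a [_ E]]. apply (top_ext HT (sigc_open a)). intro Q; rewrite E; tauto.
  - intros Q nUQ. assert (h : ~ (forall a, proj1_sig P a -> proj1_sig Q a)).
    { intro h; apply nUQ; exact (HU3 P Q h UP). }
    apply not_all_ex_not in h. destruct h as [a ha].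
    exists (fun Q : PF A => ~ proj1_sig Q a). split; [exists a; split; [tauto|tauto]|tauto].
  - assert (G : forall l : list (PF A -> Prop), (forall V, In V l -> exists a, proj1_sig P a /\ forall Q : PF A, V Q <-> ~ proj1_sig Q a) ->
        exists a, proj1_sig P a /\ forall Q : PF A, (exists V, In V l /\ V Q) -> ~ proj1_sig Q a).
    { induction l0 as [|V l0 IH]; intro H.
      - exists (atop A); split; [apply (pf_top (proj2_sig P))|intros Q [V [[] _]]].
      - destruct IH as [a [Pa Ha]]; [intros; apply H; right; auto|].
        destruct (H V (or_introl eq_refl)) as [a' [Pa' E]].
        exists (ameet A a a'); split; [apply (pf_m (proj2_sig P)); auto|].
        intros Q [W [[<-|hW] WQ]] hq; destruct (pf_mE HA (proj2_sig Q) hq) as [q1 q2].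
        + apply E in WQ; auto.
        + apply (Ha Q); eauto. }
    destruct (G l hl1) as [a [Pa Ha]]. exists a; split; [auto|].
    intros Q qa. apply NNPP; intro n. destruct (hl2 Q n) as [V [h1 h2]]. apply (Ha Q); eauto. }
destruct (@g_cc (Xd A) HT Hc U) with
    (F := fun V : PF A -> Prop => exists a, (forall Q : PF A, V Q <-> proj1_sig Q a) /\ forall Q : PF A, proj1_sig Q a -> U Q) as [l [hl1 hl2]].
- exact HU2.
- intros V [a [E _]]. apply (top_ext HT (sig_open a)). intro Q; rewrite E; tauto.
- intros Q UQ. destruct (St1 Q UQ) as [a [qa Ha]]. exists (fun Q : PF A => proj1_sig Q a).
  split; [exists a; split; [tauto|auto]|auto].
- assert (G : forall l : list (PF A -> Prop), (forall V, In V l -> exists a, (forall Q : PF A, V Q <-> proj1_sig Q a) /\ forall Q : PF A, proj1_sig Q a -> U Q) ->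
        exists a, (forall Q : PF A, proj1_sig Q a -> U Q) /\ forall Q : PF A, (exists V, In V l /\ V Q) -> proj1_sig Q a).
  { induction l0 as [|V l0 IH]; intro H.
    - exists (abot A); split; [intros Q q; destruct (pf_proper (proj2_sig Q) q)|intros Q [V [[] _]]].
    - destruct IH as [a [Ua Ha]]; [intros; apply H; right; auto|].
      destruct (H V (or_introl eq_refl)) as [a' [E Ua']].
      exists (ajoin A a a'); split.
      + intros Q q. destruct (pf_jE (proj2_sig Q) q); auto.
      + intros Q [W [[<-|hW] WQ]]; apply (pf_jI HA (proj2_sig Q)).
        * right; apply E; auto.
        * left; apply (Ha Q); eauto. }
  destruct (G l hl1) as [a [Ua Ha]]. exists a. apply Deq. intro Q; simpl. split; [apply Ua|].
  intro UQ. destruct (hl2 Q UQ) as [V [h1 h2]]. apply Ha; eauto.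
Qed.

Lemma sigA_iso : @alg_iso A (Dd (XWHBS HX)) sigA.
Proof.
split; [exact sigA_hom|].
set (g := fun U => proj1_sig (constructive_indefinite_description _ (sigA_surj U))).
assert (gK : forall U, sigA (g U) = U).
{ intro U. unfold g. destruct (constructive_indefinite_description _ (sigA_surj U)); simpl; auto. }
assert (Kg : forall a, g (sigA a) = a) by (intro a; apply sigA_inj; rewrite gK; auto).
exists g; split; [|split; auto].
pose proof sigA_hom as H.
split; intros; apply sigA_inj; rewrite ?gK.
- rewrite (hom_meet H), !gK; auto.
- rewrite (hom_join H), !gK; auto.
- rewrite (hom_imp H), !gK; auto.
- rewrite (hom_coimp H), !gK; auto.
- rewrite (hom_bot H); auto.
- rewrite (hom_top H); auto.
Qed.

End Sig.

Section Eps.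
Variable X : WHBSpace.
Let HX := wsp_ax X.
Let HT := sp_top HX.
Let HC := sp_compact HX.
Let HD := D_isWHB X.

Lemma ale_D (U V : Dcar X) : ale (A := Dd X) U V <-> forall x, proj1_sig U x -> proj1_sig V x.
Proof.
unfold ale; split.
- intros e x h. assert (E : proj1_sig (ameet (Dd X) U V) x = proj1_sig U x) by (rewrite e; auto).
  simpl in E. rewrite <- E in h. tauto.
- intro h. apply Deq. intro x; simpl. split; [tauto|auto].
Qed.

Lemma eps_pf (x : pt X) : prime_filter (A := Dd X) (fun U : Dcar X => proj1_sig U x).
Proof.
split; simpl.
- exact I.
- intros a b h1 h2; simpl; auto.
- intros a b h1 h2. exact (proj1 (ale_D a b) h2 x h1).
- auto.
- auto.
Qed.

Definition eps (x : pt X) : PF (Dd X) := exist _ _ (eps_pf x).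

Lemma cu_sep x y : ~ sle X x y -> exists U : Dcar X, proj1_sig U x /\ ~ proj1_sig U y.
Proof.
intro n. destruct (priestley HX n) as [U [h1 [h2 [h3 h4]]]].
exists (exist _ U (conj h1 h2)); simpl; auto.
Qed.

Lemma basis (O : pt X -> Prop) (y : pt X) : opens X O -> O y ->
  exists U V : Dcar X, proj1_sig U y /\ ~ proj1_sig V y /\
    forall z, proj1_sig U z -> ~ proj1_sig V z -> O z.
Proof.
intros HO Oy.
destruct (@g_cc X HT HC (fun z => ~ O z)) with
  (F := fun W => (exists U : Dcar X, proj1_sig U y /\ forall z, W z <-> ~ proj1_sig U z) \/
                 (exists U : Dcar X, ~ proj1_sig U y /\ forall z, W z <-> proj1_sig U z)) as [l [hl1 hl2]].
- apply (top_ext HT HO). intro z; split; [tauto|apply NNPP].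
- intros W [[U [_ E]]|[U [_ E]]].
  + apply (top_ext HT (proj2 (proj1 (proj2_sig U)))). intro z; rewrite E; tauto.
  + apply (top_ext HT (proj1 (proj1 (proj2_sig U)))). intro z; rewrite E; tauto.
- intros z nOz.
  assert (h : ~ sle X y z \/ ~ sle X z y).
  { apply NNPP; intro n. apply nOz. assert (e : y = z) by (apply (le_anti HX); apply NNPP; tauto). rewrite <- e; auto. }
  destruct h as [h|h]; destruct (cu_sep h) as [U [u1 u2]].
  + exists (fun z => ~ proj1_sig U z). split; [left; exists U; split; [auto|tauto]|auto].
  + exists (fun z => proj1_sig U z). split; [right; exists U; split; [auto|tauto]|auto].
- assert (G : forall l : list (pt X -> Prop), (forall W, In W l -> (exists U : Dcar X, proj1_sig U y /\ forall z, W z <-> ~ proj1_sig U z) \/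
                 (exists U : Dcar X, ~ proj1_sig U y /\ forall z, W z <-> proj1_sig U z)) ->
     exists U V : Dcar X, proj1_sig U y /\ ~ proj1_sig V y /\
       forall z, (exists W, In W l /\ W z) -> ~ proj1_sig U z \/ proj1_sig V z).
  { induction l0 as [|W l0 IH]; intro H.
    - exists (atop (Dd X)), (abot (Dd X)). simpl. split; [exact I|split; [tauto|]]. intros z [W [[] _]].
    - destruct IH as [U [V [u [v Hz]]]]; [intros; apply H; right; auto|].
      destruct (H W (or_introl eq_refl)) as [[U' [u' E]]|[V' [v' E]]].
      + exists (ameet (Dd X) U U'), V. simpl. split; [auto|split; [auto|]].
        intros z [W' [[<-|hW] Wz]]; [apply E in Wz; tauto|].
        destruct (Hz z (ex_intro _ W' (conj hW Wz))); tauto.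
      + exists U, (ajoin (Dd X) V V'). simpl. split; [auto|split; [tauto|]].
        intros z [W' [[<-|hW] Wz]]; [apply E in Wz; tauto|].
        destruct (Hz z (ex_intro _ W' (conj hW Wz))); tauto. }
  destruct (G l hl1) as [U [V [u [v Hz]]]]. exists U, V. split; [auto|split; [auto|]].
  intros z uz vz. apply NNPP; intro n. destruct (Hz z (hl2 z n)); tauto.
Qed.

Lemma eps_surj (P : PF (Dd X)) : exists x, eps x = P.
Proof.
apply NNPP; intro Hn.
assert (Hmis : forall x, exists U : Dcar X, (proj1_sig P U /\ ~ proj1_sig U x) \/ (~ proj1_sig P U /\ proj1_sig U x)).
{ intro x. apply NNPP; intro n. apply Hn. exists x. apply PF_eq. intro U; simpl. split.
  - intro h. apply NNPP; intro h'. apply n. exists U. right; auto.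
  - intro h. apply NNPP; intro h'. apply n. exists U. left; auto. }
destruct (HC (F := fun W => (exists U : Dcar X, proj1_sig P U /\ forall z, W z <-> ~ proj1_sig U z) \/
                       (exists U : Dcar X, ~ proj1_sig P U /\ forall z, W z <-> proj1_sig U z))) as [l [hl1 hl2]].
- intros W [[U [_ E]]|[U [_ E]]].
  + apply (top_ext HT (proj2 (proj1 (proj2_sig U)))). intro z; rewrite E; tauto.
  + apply (top_ext HT (proj1 (proj1 (proj2_sig U)))). intro z; rewrite E; tauto.
- intro x. destruct (Hmis x) as [U [[h1 h2]|[h1 h2]]].
  + exists (fun z => ~ proj1_sig U z). split; [left; exists U; split; [auto|tauto]|auto].
  + exists (fun z => proj1_sig U z). split; [right; exists U; split; [auto|tauto]|auto].
- assert (G : forall l : list (pt X -> Prop), (forall W, In W l -> (exists U : Dcar X, proj1_sig P U /\ forall z, W z <-> ~ proj1_sig U z) \/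
                       (exists U : Dcar X, ~ proj1_sig P U /\ forall z, W z <-> proj1_sig U z)) ->
     exists U V : Dcar X, proj1_sig P U /\ ~ proj1_sig P V /\
       forall z, (exists W, In W l /\ W z) -> ~ proj1_sig U z \/ proj1_sig V z).
  { induction l0 as [|W l0 IH]; intro H.
    - exists (atop (Dd X)), (abot (Dd X)). split; [apply (pf_top (proj2_sig P))|split; [apply (pf_proper (proj2_sig P))|]].
      intros z [W [[] _]].
    - destruct IH as [U [V [u [v Hz]]]]; [intros; apply H; right; auto|].
      destruct (H W (or_introl eq_refl)) as [[U' [u' E]]|[V' [v' E]]].
      + exists (ameet (Dd X) U U'), V. split; [apply (pf_m (proj2_sig P)); auto|split; [auto|]].
        intros z [W' [[<-|hW] Wz]]; simpl; [apply E in Wz; tauto|].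
        destruct (Hz z (ex_intro _ W' (conj hW Wz))); tauto.
      + exists U, (ajoin (Dd X) V V'). split; [auto|split; [|]].
        * intro h. destruct (pf_jE (proj2_sig P) h); auto.
        * intros z [W' [[<-|hW] Wz]]; simpl; [apply E in Wz; tauto|].
          destruct (Hz z (ex_intro _ W' (conj hW Wz))); tauto. }
  destruct (G l hl1) as [U [V [u [v Hz]]]].
  apply v. apply (pf_le (proj2_sig P)) with U; [auto|]. apply ale_D.
  intros z uz. destruct (Hz z (hl2 z)); tauto.
Qed.

Lemma eps_inj x y : eps x = eps y -> x = y.
Proof.
intro e.
assert (E : forall U : Dcar X, proj1_sig U x <-> proj1_sig U y).
{ intro U. change (proj1_sig (eps x) U <-> proj1_sig (eps y) U). rewrite e; tauto. }
apply (le_anti HX); apply NNPP; intro n; destruct (cu_sep n) as [U [h1 h2]]; apply h2, E, h1.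
Qed.

Lemma eps_Rrefl x y : sR (Xd (Dd X)) (eps x) (eps y) -> sR X x y.
Proof.
intro h. apply NNPP; intro n.
destruct (basis (R_closed HX x) n) as [U [V [u [v Hz]]]].
apply v. apply (h U V); [|exact u]. simpl.
intros z r uz. apply NNPP; intro vz. exact (Hz z uz vz r).
Qed.

Lemma eps_Srefl x y : sS (Xd (Dd X)) (eps x) (eps y) -> sS X x y.
Proof.
intro h. apply NNPP; intro n.
destruct (basis (S_closed HX x) n) as [U [V [u [v Hz]]]].
destruct (h U V u v) as [z [s [uz vz]]]. exact (Hz z uz vz s).
Qed.

Lemma eps_mor : whbs_morphism X (Xd (Dd X)) eps.
Proof.
split.
- intros W HW. simpl in HW. apply HW.
  + split.
    * intros V V' HV E. apply (top_ext HT HV). intro x; apply E.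
    * apply (top_empty HT).
    * apply (top_full HT).
    * intros V V' HV HV'. apply (top_inter HT HV HV').
    * intros F HF. eapply (top_ext HT).
      -- apply (top_union HT (F := fun V => exists W, F W /\ forall x, V x <-> W (eps x))).
         intros V [W' [FW E]]. apply (top_ext HT (HF W' FW)). intro x; rewrite E; tauto.
      -- intro x; split.
         ++ intros [V [[W' [FW E]] Vx]]. exists W'; split; [auto|apply E; auto].
         ++ intros [W' [FW Wx]]. exists (fun x => W' (eps x)); split; [exists W'; split; [auto|tauto]|auto].
  + intros W' [[U Ha]|[U Ha]].
    * apply (top_ext HT (proj1 (proj1 (proj2_sig U)))). intro x; rewrite Ha; simpl; tauto.
    * apply (top_ext HT (proj2 (proj1 (proj2_sig U)))). intro x; rewrite Ha; simpl; tauto.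
- intros x y hxy U ux. simpl in *. apply (proj2 (proj2_sig U) x y); auto.
- intros x y r U V h u. simpl in *. exact (h y r u).
- intros x Q r. destruct (eps_surj Q) as [y <-]. exists y; split; [apply eps_Rrefl; auto|auto].
- intros x y s U V u v. simpl in *. exists y; auto.
- intros x Q s. destruct (eps_surj Q) as [y <-]. exists y; split; [apply eps_Srefl; auto|auto].
Qed.

Lemma eps_iso : space_iso X (Xd (Dd X)) eps.
Proof.
split; [exact eps_mor|].
set (g := fun P => proj1_sig (constructive_indefinite_description _ (eps_surj P))).
assert (gK : forall P, eps (g P) = P).
{ intro P. unfold g. destruct (constructive_indefinite_description _ (eps_surj P)); simpl; auto. }
assert (Kg : forall x, g (eps x) = x) by (intro x; apply eps_inj; rewrite gK; auto).
exists g; split; [|split; auto].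
split.
- intros O HO. simpl.
  apply (top_ext (go_top (Dd X)) (@open_cond (Dd X) (fun U V : Dd X => forall z, proj1_sig U z -> ~ proj1_sig V z -> O z))).
  intro P; split.
  + intros [U [V [h [c1 c2]]]]. rewrite <- (gK P) in c1, c2. simpl in c1, c2. apply h; auto.
  + intro h. destruct (basis HO h) as [U [V [u [v Hz]]]]. exists U, V. split; [auto|].
    rewrite <- (gK P). simpl. split; auto.
- intros P P' h. apply NNPP; intro n. destruct (cu_sep n) as [U [u1 u2]].
  apply u2. rewrite <- (gK P) in h. rewrite <- (gK P') in h. simpl in h. apply (h U); auto.
- intros P Q r. apply eps_Rrefl. rewrite !gK; auto.
- intros P z r. exists (eps z). split; [|apply Kg].
  rewrite <- (gK P). apply (mor_R_forth eps_mor); auto.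
- intros P Q s. apply eps_Srefl. rewrite !gK; auto.
- intros P z s. exists (eps z). split; [|apply Kg].
  rewrite <- (gK P). apply (mor_S_forth eps_mor); auto.
Qed.

End Eps.

Unset Implicit Arguments.

Theorem theorem5p7 :
  (* X on objects: X(A) is a WHB-space *)
  (forall A : AlgData, isWHB A -> isWHBS (Xd A)) /\
  (* D on objects: D(X) is a WHB-algebra *)
  (forall X : WHBSpace, isWHB (Dd X)) /\
  (* X on morphisms: X(h)(P) = h^{-1}(P) is a WHBS-morphism *)
  (forall (A1 A2 : AlgData) (h : A1 -> A2),
      isWHB A1 -> isWHB A2 -> hom h ->
      exists phi : PF A2 -> PF A1,
        (forall P a, proj1_sig (phi P) a <-> proj1_sig P (h a)) /\
        whbs_morphism (Xd A2) (Xd A1) phi) /\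
  (* D on morphisms: D(f)(U) = f^{-1}(U) is a homomorphism *)
  (forall (X1 X2 : WHBSpace) (f : pt X1 -> pt X2),
      whbs_morphism X1 X2 f ->
      exists psi : Dcar X2 -> Dcar X1,
        (forall U x, proj1_sig (psi U) x <-> proj1_sig U (f x)) /\
        @hom (Dd X2) (Dd X1) psi) /\
  (* sigma_A : A -> D(X(A)), sigma_A(a) = {P | a in P}, is an isomorphism *)
  (forall (A : AlgData) (HA : isWHB A) (HX : isWHBS (Xd A)),
      exists sigma : A -> Dcar (XWHBS HX),
        (forall a P, proj1_sig (sigma a) P <-> proj1_sig P a) /\
        @alg_iso A (Dd (XWHBS HX)) sigma) /\
  (* epsilon_X : X -> X(D(X)), epsilon_X(x) = {U | x in U}, is an isomorphism *)
  (forall X : WHBSpace,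
      exists eps : pt X -> PF (Dd X),
        (forall x U, proj1_sig (eps x) U <-> proj1_sig U x) /\
        space_iso X (Xd (Dd X)) eps) /\
  (* naturality of sigma: D(X(h)) o sigma_A1 = sigma_A2 o h *)
  (forall (A1 A2 : AlgData) (h : A1 -> A2) (HA1 : isWHB A1) (HA2 : isWHB A2)
          (HX1 : isWHBS (Xd A1)) (HX2 : isWHBS (Xd A2)),
      hom h ->
      forall (sigma1 : A1 -> Dcar (XWHBS HX1)) (sigma2 : A2 -> Dcar (XWHBS HX2))
             (phi : PF A2 -> PF A1) (psi : Dcar (XWHBS HX1) -> Dcar (XWHBS HX2)),
        (forall a P, proj1_sig (sigma1 a) P <-> proj1_sig P a) ->
        (forall a P, proj1_sig (sigma2 a) P <-> proj1_sig P a) ->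
        (forall P a, proj1_sig (phi P) a <-> proj1_sig P (h a)) ->
        (forall U P, proj1_sig (psi U) P <-> proj1_sig U (phi P)) ->
        forall a, psi (sigma1 a) = sigma2 (h a)) /\
  (* naturality of epsilon: X(D(f)) o epsilon_X1 = epsilon_X2 o f *)
  (forall (X1 X2 : WHBSpace) (f : pt X1 -> pt X2),
      whbs_morphism X1 X2 f ->
      forall (eps1 : pt X1 -> PF (Dd X1)) (eps2 : pt X2 -> PF (Dd X2))
             (psi : Dcar X2 -> Dcar X1) (phi : PF (Dd X1) -> PF (Dd X2)),
        (forall x U, proj1_sig (eps1 x) U <-> proj1_sig U x) ->
        (forall x U, proj1_sig (eps2 x) U <-> proj1_sig U x) ->
        (forall U x, proj1_sig (psi U) x <-> proj1_sig U (f x)) ->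
        (forall P U, proj1_sig (phi P) U <-> proj1_sig P (psi U)) ->
        forall x, phi (eps1 x) = eps2 (f x)).
Proof.
split; [intros A HA; exact (XA_isWHBS HA)|].
split; [exact D_isWHB|].
split.
{ intros A1 A2 h HA1 HA2 Hh. exists (phiX Hh). split; [intros P a; simpl; tauto|exact (phiX_mor HA1 HA2 Hh)]. }
split.
{ intros X1 X2 f Hf. exists (psiD Hf). split; [intros U x; simpl; tauto|exact (psiD_hom Hf)]. }
split.
{ intros A HA HX. exists (sigA HX). split; [intros a P; simpl; tauto|exact (sigA_iso HA HX)]. }
split.
{ intros X. exists (@eps X). split; [intros x U; simpl; tauto|exact (eps_iso X)]. }
split.
{ intros A1 A2 h HA1 HA2 HX1 HX2 Hh sigma1 sigma2 phi psi H1 H2 H3 H4 a.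
  apply (Deq (X := XWHBS HX2)). intro P. rewrite H4, H1, H3, H2. tauto. }
{ intros X1 X2 f Hf eps1 eps2 psi phi H1 H2 H3 H4 x.
  apply PF_eq. intro U. rewrite H4, H1, H3, H2. tauto. }
Qed.
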